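(* Let $S^2\subset\mathbb{R}^3$ be the round unit sphere, let $l\colon S^3\to T^1S^2$ be the $2:1$ covering map described in the context, and let $\gamma(t)=(\cos t,\sin t,0)$, $t\in\mathbb{R}/2\pi\mathbb{Z}$, be the positively oriented equator. Let $p\in\mathbb{N}$, $q\in\mathbb{N}_0$ be coprime and let $\gamma_{p,q}$ be a $(p,q)$-satellite of $\gamma$. Then the lift of $\gamma_{p,q}$ under $l$ (i.e. a closed curve in $S^3$ projecting under $l$ onto the tangent lift of $\gamma_{p,q}$, traversed twice when $p$ is odd) is homotopic in $S^3\setminus l^{-1}(\gamma,\dot\gamma)=S^3\setminus\{(z,0):|z|=1\}$ to the curve \[t\mapsto \big(c_1e^{i\frac{pt}{2}},\,c_2e^{i\frac{(p-2q)t}{2}}\big),\] for any $c_1,c_2\in\mathbb{R}_{>0}$ with $c_1^2+c_2^2=1$, where $t$ ranges over $\mathbb{R}/2\pi\mathbb{Z}$ if $p$ is even and over $\mathbb{R}/4\pi\mathbb{Z}$ if $p$ is odd.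
   Context: Write $S^3=\{(r_1e^{it_1},r_2e^{it_2}): r_1,r_2\in[0,1],\ r_1^2+r_2^2=1,\ t_1,t_2\in\mathbb{R}/2\pi\mathbb{Z}\}\subset\mathbb{C}^2$, and $T^1S^2=\{(x,u): x\in S^2,\ u\in T_xS^2,\ |u|=1\}$. Euler angles: for $u\in T^1S^2$ not tangent (in either direction) to the equator $\{z=0\}$, $u$ determines an oriented great circle meeting the equator in two points; let $p$ be the one at which the great circle enters the upper hemisphere. Let $\phi(u)\in\mathbb{R}/2\pi\mathbb{Z}$ be the angle between the $x$-axis and $p$, $\theta(u)\in\mathbb{R}/2\pi\mathbb{Z}$ the angle along the oriented great circle from $p$ to the basepoint of $u$, and $\nu(u)\in(0,\pi)$ the angle at $p$ between the tangent of the positively oriented equator and the tangent of the oriented great circle. Then $\Phi_1(u)=(\phi,\theta,\nu)$ is a diffeomorphism from $T^1S^2$ minus the tangent lifts of the two oriented equators onto $\mathbb{R}/2\pi\mathbb{Z}\times\mathbb{R}/2\pi\mathbb{Z}\times(0,\pi)$. Let $\Phi_2(r_1e^{it_1},r_2e^{it_2})=(t_1+t_2,\,t_1-t_2,\,2\arccos r_1)$ on $S^3\setminus\{(z,0),(0,z)\}$. The map $l$ is the smooth extension of $\Phi_1^{-1}\circ\Phi_2$ to all of $S^3$, sending $(e^{it},0)$ to the (doubly traversed) tangent lift of the positively oriented equator and $(0,e^{-it})$ to that of the negatively oriented equator; it is a $2:1$ covering. Satellites: for a regular closed curve $c$ on a surface $S$ its tangent lift is $t\mapsto (c(t),\dot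 c(t)/|\dot c(t)|)\in T^1S$. Let $\gamma\colon\mathbb{R}/2\pi\mathbb{Z}\to S$ be a regular curve with a unit normal field $\eta(t)$ along it, and let $p\in\mathbb{N}$, $q\in\mathbb{N}_0$ be coprime. A curve on $S$ is a $(p,q)$-satellite of $\gamma$ if its tangent lift is homotopic, through tangent lifts of immersed curves, in $T^1S$ minus the tangent lift of $\gamma$, to the tangent lift of $t\mapsto \exp_{\gamma(pt)}(\epsilon\sin(qt)\,\eta(pt))$, $t\in\mathbb{R}/2\pi\mathbb{Z}$, for small $\epsilon>0$. *)

(* Defs.v *)
From Stdlib Require Import Reals Lra.
From Coquelicot Require Import Coquelicot.
Open Scope R_scope.

Definition V3 := (R * R * R)%type.
Definition v3x (v : V3) : R := fst (fst v).
Definition v3y (v : V3) : R := snd (fst v).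
Definition v3z (v : V3) : R := snd v.
Definition dot3 (u v : V3) : R := v3x u * v3x v + v3y u * v3y v + v3z u * v3z v.
Definition norm3 (v : V3) : R := sqrt (dot3 v v).
Definition scal3 (a : R) (v : V3) : V3 := (a * v3x v, a * v3y v, a * v3z v).
Definition add3 (u v : V3) : V3 := (v3x u + v3x v, v3y u + v3y v, v3z u + v3z v).

Definition on_S2 (x : V3) : Prop := norm3 x = 1.

Definition smooth_fun (f : R -> R) : Prop :=
  forall (n : nat) (t : R), ex_derive (Derive_n f n) t.

Definition dcurve (c : R -> V3) (t : R) : V3 :=
  (Derive (fun s => v3x (c s)) t, Derive (fun s => v3y (c s)) t,
   Derive (fun s => v3z (c s)) t).
Definition unit_tangent (c : R -> V3) (t : R) : V3 :=
  scal3 (/ norm3 (dcurve c t)) (dcurve c t).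
Definition tangent_lift (c : R -> V3) (t : R) : V3 * V3 := (c t, unit_tangent c t).

Definition closed_immersed_S2 (c : R -> V3) : Prop :=
  (forall t, on_S2 (c t)) /\
  (forall t, c (t + 2 * PI) = c t) /\
  smooth_fun (fun t => v3x (c t)) /\ smooth_fun (fun t => v3y (c t)) /\
  smooth_fun (fun t => v3z (c t)) /\
  (forall t, dcurve c t <> (0, 0, 0)).

Definition cont01 (F : R -> R -> R) : Prop :=
  forall s t, 0 <= s <= 1 -> forall eps, 0 < eps ->
  exists delta, 0 < delta /\
    forall s' t', 0 <= s' <= 1 -> Rabs (s' - s) < delta -> Rabs (t' - t) < delta ->
      Rabs (F s' t' - F s t) < eps.

Definition cont01_V3 (F : R -> R -> V3) : Prop :=
  cont01 (fun s t => v3x (F s t)) /\ cont01 (fun s t => v3y (F s t)) /\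
  cont01 (fun s t => v3z (F s t)).

Definition gamma (t : R) : V3 := (cos t, sin t, 0).
Definition in_lift_gamma (x u : V3) : Prop :=
  exists t, (x, u) = tangent_lift gamma t.

(** Homotopy of tangent lifts through tangent lifts of immersed closed curves,
    inside T^1 S^2 minus the tangent lift of gamma. *)
Definition tl_homotopic (c0 c1 : R -> V3) : Prop :=
  exists H : R -> R -> V3,
    (forall s, 0 <= s <= 1 -> closed_immersed_S2 (H s)) /\
    (forall t, H 0 t = c0 t) /\ (forall t, H 1 t = c1 t) /\
    cont01_V3 H /\ cont01_V3 (fun s t => unit_tangent (H s) t) /\
    (forall s t, 0 <= s <= 1 -> ~ in_lift_gamma (H s t) (unit_tangent (H s) t)).

Definition expS2 (x v : V3) : V3 :=
  if Req_EM_T (norm3 v) 0 then x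
  else add3 (scal3 (cos (norm3 v)) x) (scal3 (sin (norm3 v) / norm3 v) v).

Definition unit_normal_field_gamma (eta : R -> V3) : Prop :=
  (forall t, dot3 (eta t) (gamma t) = 0) /\
  (forall t, dot3 (eta t) (dcurve gamma t) = 0) /\
  (forall t, norm3 (eta t) = 1) /\
  (forall t, eta (t + 2 * PI) = eta t) /\
  smooth_fun (fun t => v3x (eta t)) /\ smooth_fun (fun t => v3y (eta t)) /\
  smooth_fun (fun t => v3z (eta t)).

Definition sat_model (eta : R -> V3) (p q : nat) (eps : R) (t : R) : V3 :=
  expS2 (gamma (INR p * t)) (scal3 (eps * sin (INR q * t)) (eta (INR p * t))).

Definition is_satellite (eta : R -> V3) (p q : nat) (c : R -> V3) : Prop :=
  closed_immersed_S2 c /\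
  exists eps0, 0 < eps0 /\
    forall eps, 0 < eps < eps0 -> tl_homotopic c (sat_model eta p q eps).

(** * S^3 in C^2 = R^4: a point is ((Re z1, Im z1), (Re z2, Im z2)) *)
Definition V4 := ((R * R) * (R * R))%type.
Definition on_S3 (w : V4) : Prop :=
  let '((a, b), (c, d)) := w in a * a + b * b + c * c + d * d = 1.

(** The 2:1 covering l : S^3 -> T^1 S^2 (smooth extension of Phi1^{-1} o Phi2),
    written in closed form: with z1 = a+ib, z2 = c+id,
    basepoint = (Re(z1^2+z2^2), Im(z1^2+z2^2), 2 Im(z1 conj z2)),
    direction = (Im(z2^2) - Im(z1^2), Re(z1^2) - Re(z2^2), 2 Re(z1 conj z2)). *)
Definition lmap (w : V4) : V3 * V3 :=
  let '((a, b), (c, d)) := w in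
  ((a*a - b*b + c*c - d*d, 2*a*b + 2*c*d, 2*(b*c - a*d)),
   (2*c*d - 2*a*b, a*a - b*b - c*c + d*d, 2*(a*c + b*d))).

Definition loop_homotopic_S3_minus (T : R) (a b : R -> V4) : Prop :=
  exists G : R -> R -> V4,
    cont01 (fun s t => fst (fst (G s t))) /\ cont01 (fun s t => snd (fst (G s t))) /\
    cont01 (fun s t => fst (snd (G s t))) /\ cont01 (fun s t => snd (snd (G s t))) /\
    (forall t, G 0 t = a t) /\ (forall t, G 1 t = b t) /\
    (forall s t, 0 <= s <= 1 -> G s (t + T) = G s t) /\
    (forall s t, 0 <= s <= 1 -> on_S3 (G s t) /\ snd (G s t) <> (0, 0)).

Definition torus_curve (c1 c2 : R) (p q : nat) (t : R) : V4 :=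
  ((c1 * cos (INR p * t / 2), c1 * sin (INR p * t / 2)),
   (c2 * cos ((INR p - 2 * INR q) * t / 2), c2 * sin ((INR p - 2 * INR q) * t / 2))).

(* Main.v *)
Require Import Defs.
From Stdlib Require Import Reals Lra Lia Psatz ZArith.
From Stdlib Require Import FunctionalExtensionality ClassicalEpsilon Classical.
From Coquelicot Require Import Coquelicot.
Open Scope R_scope.

Lemma cpt_ed f x : continuity_pt f x -> forall e, 0 < e ->
  exists d, 0 < d /\ forall y, Rabs (y - x) < d -> Rabs (f y - f x) < e.
Proof.
  intros H e He. destruct (H e He) as [d [Hd H']]. exists d; split; auto.
  intros y Hy. destruct (Req_dec y x) as [->|Hne].
  - rewrite Rminus_diag, Rabs_R0; auto.
  - apply (H' y). split; [split; [exact I| auto] | exact Hy].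
Qed.

Lemma ed_cpt f x : (forall e, 0 < e ->
  exists d, 0 < d /\ forall y, Rabs (y - x) < d -> Rabs (f y - f x) < e) -> continuity_pt f x.
Proof.
  intros H e He. destruct (H e He) as [d [Hd H']]. exists d; split; auto.
  intros y [_ Hy]. apply H'. exact Hy.
Qed.

Lemma cp_plus f g x : continuity_pt f x -> continuity_pt g x -> continuity_pt (fun t => f t + g t) x.
Proof. apply continuity_pt_plus. Qed.
Lemma cp_minus f g x : continuity_pt f x -> continuity_pt g x -> continuity_pt (fun t => f t - g t) x.
Proof. apply continuity_pt_minus. Qed.
Lemma cp_mult f g x : continuity_pt f x -> continuity_pt g x -> continuity_pt (fun t => f t * g t) x.
Proof. apply continuity_pt_mult. Qed.
Lemma cp_opp f x : continuity_pt f x -> continuity_pt (fun t => - f t) x.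
Proof. apply continuity_pt_opp. Qed.
Lemma cp_const c x : continuity_pt (fun _ => c) x.
Proof. apply continuity_pt_const. intros a b; reflexivity. Qed.
Lemma cp_id x : continuity_pt (fun t => t) x.
Proof. apply derivable_continuous_pt. apply derivable_pt_id. Qed.
Lemma cp_comp f g x : continuity_pt f x -> continuity_pt g (f x) -> continuity_pt (fun t => g (f t)) x.
Proof. intros. apply (continuity_pt_comp f g x); auto. Qed.
Lemma cp_cos f x : continuity_pt f x -> continuity_pt (fun t => cos (f t)) x.
Proof. intros. apply cp_comp; auto. apply continuity_cos. Qed.
Lemma cp_sin f x : continuity_pt f x -> continuity_pt (fun t => sin (f t)) x.
Proof. intros. apply cp_comp; auto. apply continuity_sin. Qed.
Lemma cp_atan f x : continuity_pt f x -> continuity_pt (fun t => atan (f t)) x.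
Proof. intros. apply cp_comp; auto. apply derivable_continuous_pt, derivable_pt_atan. Qed.
Lemma cp_inv f x : continuity_pt f x -> f x <> 0 -> continuity_pt (fun t => / f t) x.
Proof. intros. apply (continuity_pt_inv f x); auto. Qed.
Lemma cp_div f g x : continuity_pt f x -> continuity_pt g x -> g x <> 0 -> continuity_pt (fun t => f t / g t) x.
Proof. intros. unfold Rdiv. apply cp_mult; auto. apply cp_inv; auto. Qed.
Lemma cp_sqrt f x : continuity_pt f x -> 0 < f x -> continuity_pt (fun t => sqrt (f t)) x.
Proof. intros. apply cp_comp; auto. apply sqrt_continuity_pt; auto. Qed.

Lemma exd_cpt f x : ex_derive f x -> continuity_pt f x.
Proof. intros H. apply continuity_pt_filterlim. exact (@ex_derive_continuous R_AbsRing R_NormedModule f x H). Qed.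

Lemma creep (a b : R) (P : R -> Prop) : a <= b -> P a ->
  (forall x, a <= x <= b -> exists d, 0 < d /\ forall y z, x - d < y -> y <= z -> z < x + d ->
      a <= y -> z <= b -> P y -> P z) -> P b.
Proof.
  intros Hab Pa Hloc.
  set (E := fun x => a <= x <= b /\ forall y, a <= y <= x -> P y).
  assert (HEa : E a). { split. lra. intros y Hy. replace y with a by lra. exact Pa. }
  assert (Hb : bound E). { exists b. intros x [Hx _]. lra. }
  destruct (completeness E Hb (ex_intro _ a HEa)) as [c [Hub Hlub]].
  assert (Hac : a <= c) by (apply Hub; exact HEa).
  assert (Hcb : c <= b). { apply Hlub. intros x [Hx _]. lra. }
  destruct (Hloc c (conj Hac Hcb)) as [d [Hd Hl]].
  assert (Hex : exists x0, E x0 /\ c - d < x0).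
  { apply NNPP. intro Hn.
    assert (c <= c - d). { apply Hlub. intros x Ex. apply Rnot_lt_le. intro Hlt. apply Hn. exists x; auto. }
    lra. }
  destruct Hex as [x0 [[Hx0 HPx0] Hlt]].
  assert (Hx0c : x0 <= c) by (apply Hub; split; auto).
  set (z0 := Rmin b (c + d / 2)).
  assert (HEz : E z0).
  { split. unfold z0. split. apply Rmin_glb; lra. apply Rmin_l.
    intros y Hy. destruct (Rle_dec y x0) as [Hyx|Hyx].
    - apply HPx0. lra.
    - apply (Hl x0 y); try lra.
      + assert (z0 <= c + d/2) by apply Rmin_r. lra.
      + assert (z0 <= b) by apply Rmin_l. lra.
      + apply HPx0; lra. }
  assert (Hz0c : z0 <= c) by (apply Hub; exact HEz).
  assert (Hz0b : z0 = b).
  { unfold z0 in *. unfold Rmin in *. destruct (Rle_dec b (c + d/2)); lra. }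
  destruct HEz as [_ HP]. apply HP. lra.
Qed.

Lemma sc1 a : sin a * sin a + cos a * cos a = 1.
Proof. assert (H := sin2_cos2 a). unfold Rsqr in H. exact H. Qed.

Definition pm (x y a : R) := exists r, 0 < r /\ x = r * cos a /\ y = r * sin a.

Lemma pm_nz x y a : pm x y a -> 0 < x * x + y * y.
Proof.
  intros [r [Hr [-> ->]]].
  replace (r * cos a * (r * cos a) + r * sin a * (r * sin a)) with (r * r * (sin a * sin a + cos a * cos a)) by ring.
  rewrite sc1. nra.
Qed.

Lemma pm_r x y a r : 0 < r -> x = r * cos a -> y = r * sin a -> r * r = x * x + y * y.
Proof.
  intros Hr -> ->.
  replace (r * cos a * (r * cos a) + r * sin a * (r * sin a)) with (r * r * (sin a * sin a + cos a * cos a)) by ring.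
  rewrite sc1. ring.
Qed.

Lemma pm_cos1 x y a b : pm x y a -> pm x y b -> cos (a - b) = 1.
Proof.
  intros [r [Hr [Hx Hy]]] [r' [Hr' [Hx' Hy']]].
  assert (E1 := pm_r _ _ _ _ Hr Hx Hy). assert (E2 := pm_r _ _ _ _ Hr' Hx' Hy').
  assert (r = r') by nra. subst r'.
  rewrite cos_minus.
  apply Rmult_eq_reg_l with (r * r); [|nra].
  transitivity (x * x + y * y); [|lra].
  rewrite Hx at 1. rewrite Hx'. rewrite Hy at 1. rewrite Hy'. ring.
Qed.

Lemma cos1_sin0 d : cos d = 1 -> sin d = 0.
Proof. intros H. assert (Hs := sc1 d). rewrite H in Hs. nra. Qed.

Lemma pm_shift x y a d : pm x y a -> cos d = 1 -> pm x y (a + d).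
Proof.
  intros [r [Hr [Hx Hy]]] Hd. exists r. split; auto.
  rewrite cos_plus, sin_plus, Hd, (cos1_sin0 _ Hd). split; [rewrite Hx|rewrite Hy]; ring.
Qed.

Lemma pm_rot x y a f : pm x y a -> pm (cos f * x - sin f * y) (sin f * x + cos f * y) (a + f).
Proof.
  intros [r [Hr [Hx Hy]]]. exists r. split; auto.
  rewrite cos_plus, sin_plus, Hx, Hy. split; ring.
Qed.

Lemma pm_mul x1 y1 a x2 y2 b : pm x1 y1 a -> pm x2 y2 b ->
  pm (x1 * x2 - y1 * y2) (x1 * y2 + y1 * x2) (a + b).
Proof.
  intros [r [Hr [Hx Hy]]] [r' [Hr' [Hx' Hy']]]. exists (r * r'). split. nra.
  rewrite cos_plus, sin_plus, Hx, Hy, Hx', Hy'. split; ring.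
Qed.

Lemma pm_scale x y a k : 0 < k -> pm (k * x) (k * y) a -> pm x y a.
Proof.
  intros Hk [r [Hr [Hx Hy]]]. exists (r / k). split. apply Rdiv_lt_0_compat; auto.
  split; apply Rmult_eq_reg_l with k; try lra; [rewrite Hx|rewrite Hy]; field; lra.
Qed.

Lemma pm_scale' x y a k : 0 < k -> pm x y a -> pm (k * x) (k * y) a.
Proof.
  intros Hk [r [Hr [Hx Hy]]]. exists (k * r). split. nra. rewrite Hx, Hy. split; ring.
Qed.

Lemma pm_ext x y a x' y' : pm x y a -> x = x' -> y = y' -> pm x' y' a.
Proof. intros H <- <-; auto. Qed.

Lemma pm_atan x y : 0 < x -> pm x y (atan (y / x)).
Proof.
  intros Hx. set (u := y / x). assert (Hs : 0 < sqrt (1 + u²)).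
  { apply sqrt_lt_R0. unfold Rsqr. nra. }
  exists (x * sqrt (1 + u²)). split. nra.
  rewrite cos_atan, sin_atan. split.
  - field; repeat split; apply Rgt_not_eq; assumption.
  - unfold u. field; repeat split; apply Rgt_not_eq; assumption.
Qed.

Lemma pm_exists x y : 0 < x * x + y * y -> exists a, pm x y a.
Proof.
  intros H. destruct (Rlt_le_dec 0 x) as [Hx|Hx].
  - exists (atan (y / x)). apply pm_atan; auto.
  - destruct (Rlt_le_dec x 0) as [Hx'|Hx'].
    + exists (atan (-y / -x) + PI).
      assert (H1 := pm_rot _ _ _ PI (pm_atan (-x) (-y) ltac:(lra))).
      rewrite cos_PI, sin_PI in H1. eapply pm_ext. exact H1. ring. ring.
    + assert (x = 0) by lra. subst x.
      destruct (Rlt_le_dec 0 y).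
      * exists (PI/2). exists y. rewrite cos_PI2, sin_PI2. repeat split; auto; ring.
      * exists (-(PI/2)). exists (-y). rewrite cos_neg, sin_neg, cos_PI2, sin_PI2.
        assert (y <> 0) by (intro; subst; lra). repeat split; try ring. lra.
Qed.

Lemma pm_same_sign x y a k1 k2 : pm (k1 * x) (k1 * y) a -> pm (k2 * x) (k2 * y) a ->
  0 < x * x + y * y -> 0 < k1 * k2.
Proof.
  intros [r [Hr [Hx Hy]]] [r' [Hr' [Hx' Hy']]] Hn.
  assert (E : k1 * k2 * (x * x + y * y) = r * r' * (sin a * sin a + cos a * cos a)).
  { transitivity ((k1 * x) * (k2 * x) + (k1 * y) * (k2 * y)). ring.
    rewrite Hx, Hy, Hx', Hy'. ring. }
  rewrite sc1 in E.
  assert (0 < r * r') by nra.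
  destruct (Rlt_le_dec 0 (k1 * k2)); auto. nra.
Qed.

Lemma cos_lt_1 h : 0 < h <= PI -> cos h < 1.
Proof.
  intros Hh. replace h with (2 * (h/2)) by field. rewrite cos_2a_sin.
  assert (0 < sin (h/2)). { apply sin_gt_0; lra. } nra.
Qed.

Lemma cos1_const g : continuity g -> (forall t, cos (g t) = 1) -> forall t, g t = g 0.
Proof.
  intros Hc H t. apply NNPP. intro Hne.
  assert (Hcase : exists u v, g u < g v).
  { destruct (Rlt_le_dec (g t) (g 0)). exists t, 0. auto. exists 0, t. lra. }
  destruct Hcase as [u [v Huv]].
  set (h := Rmin PI ((g v - g u)/2)).
  assert (Hh : 0 < h <= PI).
  { unfold h. split. apply Rmin_glb_lt. apply PI_RGT_0. lra. apply Rmin_l. }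
  assert (Hh2 : h <= (g v - g u)/2) by apply Rmin_r.
  set (f := fun s => g s - (g u + h)).
  assert (Hf : continuity f). { unfold f. intro x. apply cp_minus. apply Hc. apply cp_const. }
  assert (Hprod : f (Rmin u v) * f (Rmax u v) <= 0).
  { unfold f, Rmin, Rmax. destruct (Rle_dec u v); nra. }
  destruct (IVT_cor f (Rmin u v) (Rmax u v) Hf (Rmin_Rmax u v) Hprod) as [z [_ Hz]].
  unfold f in Hz. assert (Hgz : g z = g u + h) by lra.
  assert (Hcz := H z). rewrite Hgz, cos_plus, (H u), (cos1_sin0 _ (H u)) in Hcz.
  assert (cos h < 1) by (apply cos_lt_1; auto). lra.
Qed.

Lemma pm1_const g : continuity g -> (forall t, g t = 1 \/ g t = -1) -> forall t, g t = g 0.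
Proof.
  intros Hc H t. apply NNPP. intro Hne.
  assert (Hprod : g (Rmin t 0) * g (Rmax t 0) <= 0).
  { unfold Rmin, Rmax. destruct (Rle_dec t 0); destruct (H t); destruct (H 0); nra. }
  destruct (IVT_cor g _ _ Hc (Rmin_Rmax t 0) Hprod) as [z [_ Hz]].
  destruct (H z); lra.
Qed.

Definition clamp (a b t : R) := Rmax a (Rmin t b).

Lemma clamp_lip a b t t' : Rabs (clamp a b t - clamp a b t') <= Rabs (t - t').
Proof.
  unfold clamp, Rmax, Rmin.
  destruct (Rle_dec t b); destruct (Rle_dec t' b);
  repeat match goal with |- context [Rle_dec ?x ?y] => destruct (Rle_dec x y) end;
  unfold Rabs; repeat match goal with |- context [Rcase_abs ?x] => destruct (Rcase_abs x) end; lra.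
Qed.

Lemma clamp_cont a b : continuity (clamp a b).
Proof.
  intro x. apply ed_cpt. intros e He. exists e. split; auto. intros y Hy.
  eapply Rle_lt_trans. apply clamp_lip. auto.
Qed.

Lemma clamp_in a b t : a <= b -> a <= clamp a b t <= b.
Proof. intros. unfold clamp, Rmax, Rmin. repeat destruct Rle_dec; lra. Qed.

Lemma clamp_id a b t : a <= t <= b -> clamp a b t = t.
Proof. intros. unfold clamp, Rmax, Rmin. repeat destruct Rle_dec; lra. Qed.

Lemma cont_clamp_comp f a b : continuity f -> continuity (fun t => f (clamp a b t)).
Proof. intros Hf x. apply cp_comp. apply clamp_cont. apply Hf. Qed.

Lemma lift_uniq fx fy a b th1 th2 : a <= b -> continuity th1 -> continuity th2 ->
  (forall t, a <= t <= b -> pm (fx t) (fy t) (th1 t)) ->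
  (forall t, a <= t <= b -> pm (fx t) (fy t) (th2 t)) ->
  forall t1 t2, a <= t1 <= b -> a <= t2 <= b -> th1 t1 - th2 t1 = th1 t2 - th2 t2.
Proof.
  intros Hab H1 H2 L1 L2 t1 t2 Ht1 Ht2.
  set (g := fun t => th1 (clamp a b t) - th2 (clamp a b t)).
  assert (Hg : continuity g).
  { intro x. apply cp_minus; apply cont_clamp_comp; auto. }
  assert (Hc : forall t, cos (g t) = 1).
  { intro t. unfold g. apply (pm_cos1 (fx (clamp a b t)) (fy (clamp a b t))).
    apply L1, clamp_in; auto. apply L2, clamp_in; auto. }
  assert (E1 := cos1_const g Hg Hc t1). assert (E2 := cos1_const g Hg Hc t2).
  unfold g in E1, E2. rewrite (clamp_id a b t1) in E1 by auto. rewrite (clamp_id a b t2) in E2 by auto.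
  lra.
Qed.
Lemma Rabs_def2b x a : Rabs x <= a -> - a <= x <= a.
Proof. unfold Rabs. destruct (Rcase_abs x); intros; lra. Qed.

Lemma near_pos X Y a1 b1 a2 b2 e : 0 < e -> 20 * (e * e) <= X * X + Y * Y ->
  Rabs a1 < e -> Rabs b1 < e -> Rabs a2 < e -> Rabs b2 < e ->
  0 < (X + a1) * (X + a2) + (Y + b1) * (Y + b2).
Proof.
  intros He HD H1 H2 H3 H4.
  apply Rabs_def2 in H1, H2, H3, H4.
  assert (0 <= (X/2 + (a1 + a2)) * (X/2 + (a1 + a2))) by apply Rle_0_sqr.
  assert (0 <= (Y/2 + (b1 + b2)) * (Y/2 + (b1 + b2))) by apply Rle_0_sqr.
  assert ((a1 + a2) * (a1 + a2) <= 4 * (e * e)) by nra.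
  assert ((b1 + b2) * (b1 + b2) <= 4 * (e * e)) by nra.
  assert (- (e * e) <= a1 * a2) by nra.
  assert (- (e * e) <= b1 * b2) by nra.
  nra.
Qed.

Lemma eps_choice D : 0 < D -> exists e, 0 < e /\ 20 * (e * e) <= D.
Proof.
  intros HD. exists (Rmin 1 (D / 20)). unfold Rmin. destruct (Rle_dec 1 (D/20)); split; try lra; nra.
Qed.

Lemma pm_transfer x0 y0 a x y : pm x0 y0 a -> 0 < x * x0 + y * y0 ->
  pm x y (a + atan ((y * x0 - x * y0) / (x * x0 + y * y0))).
Proof.
  intros H Hp. assert (Hat := pm_atan _ (y * x0 - x * y0) Hp).
  assert (Hm := pm_mul _ _ _ _ _ _ H Hat).
  assert (Hk := pm_nz _ _ _ H).
  apply (pm_scale _ _ _ (x0 * x0 + y0 * y0) Hk).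
  eapply pm_ext. exact Hm. ring. ring.
Qed.

Lemma glue g1 g2 y : continuity g1 -> continuity g2 -> g1 y = g2 y ->
  continuity (fun t => if Rle_dec t y then g1 t else g2 t).
Proof.
  intros H1 H2 Hy x. apply ed_cpt. intros e He.
  destruct (cpt_ed _ _ (H1 x) e He) as [d1 [Hd1 D1]].
  destruct (cpt_ed _ _ (H2 x) e He) as [d2 [Hd2 D2]].
  destruct (Rtotal_order x y) as [Hxy|[Hxy|Hxy]].
  - exists (Rmin d1 (y - x)). split. apply Rmin_glb_lt; lra.
    intros t Ht. assert (Ht1 : Rabs (t - x) < d1) by (eapply Rlt_le_trans; [exact Ht|apply Rmin_l]).
    assert (Ht2 : Rabs (t - x) < y - x) by (eapply Rlt_le_trans; [exact Ht|apply Rmin_r]).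
    apply Rabs_def2 in Ht2.
    destruct (Rle_dec t y); [|lra]. destruct (Rle_dec x y); [|lra]. auto.
  - subst x. exists (Rmin d1 d2). split. apply Rmin_glb_lt; lra.
    intros t Ht. assert (Ht1 : Rabs (t - y) < d1) by (eapply Rlt_le_trans; [exact Ht|apply Rmin_l]).
    assert (Ht2 : Rabs (t - y) < d2) by (eapply Rlt_le_trans; [exact Ht|apply Rmin_r]).
    destruct (Rle_dec y y); [|lra]. destruct (Rle_dec t y); auto. rewrite Hy. auto.
  - exists (Rmin d2 (x - y)). split. apply Rmin_glb_lt; lra.
    intros t Ht. assert (Ht1 : Rabs (t - x) < d2) by (eapply Rlt_le_trans; [exact Ht|apply Rmin_l]).
    assert (Ht2 : Rabs (t - x) < x - y) by (eapply Rlt_le_trans; [exact Ht|apply Rmin_r]).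
    apply Rabs_def2 in Ht2.
    destruct (Rle_dec t y); [lra|]. destruct (Rle_dec x y); [lra|]. auto.
Qed.

Lemma lift_ex fx fy a b : a <= b -> continuity fx -> continuity fy ->
  (forall t, 0 < fx t * fx t + fy t * fy t) ->
  exists th, continuity th /\ forall t, a <= t <= b -> pm (fx t) (fy t) (th t).
Proof.
  intros Hab Cx Cy Hnz.
  apply (creep a b (fun x => exists th, continuity th /\ forall t, a <= t <= x -> pm (fx t) (fy t) (th t))); auto.
  - destruct (pm_exists _ _ (Hnz a)) as [al Hal]. exists (fun _ => al). split.
    intro x; apply cp_const. intros t Ht. replace t with a by lra. auto.
  - intros x Hx. destruct (eps_choice _ (Hnz x)) as [e [He HeD]].
    destruct (cpt_ed _ _ (Cx x) e He) as [d1 [Hd1 D1]].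
    destruct (cpt_ed _ _ (Cy x) e He) as [d2 [Hd2 D2]].
    exists (Rmin d1 d2). split. apply Rmin_glb_lt; lra.
    intros y z Hy Hyz Hz Hay Hzb [th [Hth Hl]].
    assert (Hm1 := Rmin_l d1 d2). assert (Hm2 := Rmin_r d1 d2).
    set (c := clamp y z).
    set (P1 := fun t => fx (c t) * fx y + fy (c t) * fy y).
    set (P2 := fun t => fy (c t) * fx y - fx (c t) * fy y).
    assert (HP1 : forall t, 0 < P1 t).
    { intro t. unfold P1. assert (Hc := clamp_in y z t Hyz). fold c in Hc.
      replace (fx (c t)) with (fx x + (fx (c t) - fx x)) by ring.
      replace (fy (c t)) with (fy x + (fy (c t) - fy x)) by ring.
      replace (fx y) with (fx x + (fx y - fx x)) by ring.
      replace (fy y) with (fy x + (fy y - fy x)) by ring.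
      apply near_pos with e; auto.
      apply D1. apply Rabs_def1; lra. apply D2. apply Rabs_def1; lra.
      apply D1. apply Rabs_def1; lra. apply D2. apply Rabs_def1; lra. }
    assert (CP1 : continuity P1).
    { intro t. unfold P1. apply cp_plus; apply cp_mult; try apply cp_const;
      apply cont_clamp_comp; auto. }
    assert (CP2 : continuity P2).
    { intro t. unfold P2. apply cp_minus; apply cp_mult; try apply cp_const;
      apply cont_clamp_comp; auto. }
    exists (fun t => if Rle_dec t y then th t else th y + atan (P2 t / P1 t)). split.
    + apply glue; auto.
      * intro t. apply cp_plus. apply cp_const. apply cp_atan. apply cp_div; auto.
        apply Rgt_not_eq, HP1.
      * unfold P2, c. rewrite clamp_id by lra.
        replace (fy y * fx y - fx y * fy y) with 0 by ring. unfold Rdiv. rewrite Rmult_0_l, atan_0. ring.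
    + intros t Ht. destruct (Rle_dec t y) as [Hty|Hty].
      * apply Hl. lra.
      * assert (Hct : c t = t) by (apply clamp_id; lra).
        assert (H := pm_transfer _ _ _ (fx t) (fy t) (Hl y ltac:(lra))).
        unfold P1, P2. rewrite Hct. apply H. specialize (HP1 t). unfold P1 in HP1. rewrite Hct in HP1. exact HP1.
Qed.

Lemma lift_global fx fy : continuity fx -> continuity fy ->
  (forall t, 0 < fx t * fx t + fy t * fy t) ->
  exists th, continuity th /\ forall t, pm (fx t) (fy t) (th t).
Proof.
  intros Cx Cy Hnz.
  destruct (pm_exists _ _ (Hnz 0)) as [al Hal].
  assert (Hn : forall n : nat, exists th, continuity th /\
     (forall t, - INR n - 1 <= t <= INR n + 1 -> pm (fx t) (fy t) (th t)) /\ th 0 = al).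
  { intro n. assert (Hn0 := pos_INR n).
    destruct (lift_ex fx fy (- INR n - 1) (INR n + 1) ltac:(lra) Cx Cy Hnz) as [th [Hc Hl]].
    exists (fun t => th t + (al - th 0)). split; [|split].
    - intro x. apply cp_plus; auto. apply cp_const.
    - intros t Ht. apply pm_shift. auto. apply (pm_cos1 (fx 0) (fy 0)); auto.
      replace (th 0 + (al - th 0)) with al by ring. auto. apply Hl. lra.
    - ring. }
  set (TH := fun n => proj1_sig (constructive_indefinite_description _ (Hn n))).
  assert (HTH : forall n, continuity (TH n) /\
     (forall t, - INR n - 1 <= t <= INR n + 1 -> pm (fx t) (fy t) (TH n t)) /\ TH n 0 = al).
  { intro n. unfold TH. destruct (constructive_indefinite_description _ (Hn n)) as [th Hth]. exact Hth. }
  assert (Hagree : forall n m t, Rabs t <= Rmin (INR n) (INR m) + 1 -> TH n t = TH m t).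
  { intros n m t Ht. destruct (HTH n) as [C1 [L1 E1]]. destruct (HTH m) as [C2 [L2 E2]].
    set (R0 := Rmin (INR n) (INR m) + 1).
    assert (HR0 : 0 <= Rmin (INR n) (INR m)). { apply Rmin_glb; apply pos_INR. }
    assert (Hmn := Rmin_l (INR n) (INR m)). assert (Hmm := Rmin_r (INR n) (INR m)).
    assert (E := lift_uniq fx fy (- R0) R0 (TH n) (TH m) ltac:(unfold R0; lra) C1 C2
      ltac:(intros s Hs; apply L1; unfold R0 in Hs; lra)
      ltac:(intros s Hs; apply L2; unfold R0 in Hs; lra) t 0).
    apply Rabs_def2b in Ht. rewrite E1, E2 in E. assert (TH n t - TH m t = al - al). apply E; unfold R0 in *; lra. lra. }
  set (N := fun t => Z.to_nat (up (Rabs t))).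
  assert (HN : forall t, Rabs t <= INR (N t)).
  { intro t. unfold N. destruct (archimed (Rabs t)) as [H1 _].
    assert (Hpos : (0 <= up (Rabs t))%Z). { apply le_IZR. assert (0 <= Rabs t) by apply Rabs_pos. lra. }
    rewrite INR_IZR_INZ, Z2Nat.id; auto. lra. }
  exists (fun t => TH (N t) t). split.
  - intro x. set (m := Z.to_nat (up (Rabs x + 1))).
    assert (Hm : Rabs x + 1 <= INR m).
    { unfold m. destruct (archimed (Rabs x + 1)) as [H1 _].
      assert (Hpos : (0 <= up (Rabs x + 1))%Z). { apply le_IZR. assert (0 <= Rabs x) by apply Rabs_pos. lra. }
      rewrite INR_IZR_INZ, Z2Nat.id; auto. lra. }
    destruct (HTH m) as [C _].
    apply ed_cpt. intros e He. destruct (cpt_ed _ _ (C x) e He) as [d [Hd D]].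
    exists (Rmin d 1). split. apply Rmin_glb_lt; lra.
    intros y Hy. assert (Hy1 : Rabs (y - x) < d) by (eapply Rlt_le_trans; [exact Hy|apply Rmin_l]).
    assert (Hy2 : Rabs (y - x) < 1) by (eapply Rlt_le_trans; [exact Hy|apply Rmin_r]).
    rewrite (Hagree (N y) m y), (Hagree (N x) m x); auto.
    + unfold Rmin. destruct Rle_dec; [assert (Hx := HN x); lra | lra].
    + unfold Rmin. destruct Rle_dec. assert (Hx := HN y); lra.
      assert (Rabs y <= Rabs x + Rabs (y - x)).
      { replace y with (x + (y - x)) at 1 by ring. apply Rabs_triang. } lra.
  - intro t. destruct (HTH (N t)) as [_ [L _]]. apply L. assert (H := HN t).
    apply Rabs_def2b in H. lra.
Qed.

Lemma cpt_unif (Q : R -> R -> Prop) s0 a b : a <= b ->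
  (forall t, a <= t <= b -> exists d, 0 < d /\ forall s' t', Rabs (s' - s0) < d -> Rabs (t' - t) < d -> Q s' t') ->
  exists e, 0 < e /\ forall s' t, Rabs (s' - s0) < e -> a <= t <= b -> Q s' t.
Proof.
  intros Hab H.
  apply (creep a b (fun x => exists e, 0 < e /\ forall s' t, Rabs (s' - s0) < e -> a <= t <= x -> Q s' t)); auto.
  - destruct (H a ltac:(lra)) as [d [Hd Hq]]. exists d. split; auto.
    intros s' t Hs Ht. apply Hq; auto. replace (t - a) with 0 by lra. rewrite Rabs_R0; lra.
  - intros x Hx. destruct (H x Hx) as [d [Hd Hq]]. exists d. split; auto.
    intros y z Hy Hyz Hz Hay Hzb [e [He Hl]]. exists (Rmin e d). split. apply Rmin_glb_lt; lra.
    intros s' t Hs Ht. assert (Hs1 : Rabs (s' - s0) < e) by (eapply Rlt_le_trans; [exact Hs|apply Rmin_l]).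
    assert (Hs2 : Rabs (s' - s0) < d) by (eapply Rlt_le_trans; [exact Hs|apply Rmin_r]).
    destruct (Rle_dec t y). apply Hl; auto; lra. apply Hq; auto. apply Rabs_def1; lra.
Qed.
Lemma cont01_slice F s : cont01 F -> 0 <= s <= 1 -> continuity (F s).
Proof.
  intros H Hs t. apply ed_cpt. intros e He. destruct (H s t Hs e He) as [d [Hd Hq]].
  exists d. split; auto. intros y Hy. apply Hq; auto. rewrite Rminus_diag, Rabs_R0; auto.
Qed.

Section Inv.
Variables (Fx Fy : R -> R -> R) (P : R).
Hypothesis HP : 0 < P.
Hypothesis CFx : cont01 Fx.
Hypothesis CFy : cont01 Fy.
Hypothesis Hnz : forall s t, 0 <= s <= 1 -> 0 < Fx s t * Fx s t + Fy s t * Fy s t.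
Hypothesis Hper : forall s t, 0 <= s <= 1 -> Fx s (t + P) = Fx s t /\ Fy s (t + P) = Fy s t.

Definition liftP s th := continuity th /\ forall t, 0 <= t <= P -> pm (Fx s t) (Fy s t) (th t).

Lemma liftP_ex s : 0 <= s <= 1 -> exists th, liftP s th.
Proof.
  intros Hs. destruct (lift_ex (Fx s) (Fy s) 0 P ltac:(lra) (cont01_slice _ _ CFx Hs) (cont01_slice _ _ CFy Hs)
    (fun t => Hnz s t Hs)) as [th H]. exists th. exact H.
Qed.

Lemma inv_local s0 : 0 <= s0 <= 1 -> exists e, 0 < e /\ forall s, 0 <= s <= 1 -> Rabs (s - s0) < e ->
  forall ths th0, liftP s ths -> liftP s0 th0 -> ths P - ths 0 = th0 P - th0 0.
Proof.
  intros Hs0.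
  destruct (cpt_unif (fun s' t => 0 <= s' <= 1 -> 0 < Fx s' t * Fx s0 t + Fy s' t * Fy s0 t) s0 0 P ltac:(lra))
    as [e [He Hu]].
  { intros t Ht. destruct (eps_choice _ (Hnz s0 t Hs0)) as [e [He HeD]].
    destruct (CFx s0 t Hs0 e He) as [d1 [Hd1 D1]].
    destruct (CFy s0 t Hs0 e He) as [d2 [Hd2 D2]].
    exists (Rmin d1 d2). split. apply Rmin_glb_lt; lra.
    intros s' t' Hs' Ht' Hs'01.
    assert (Hm1 := Rmin_l d1 d2). assert (Hm2 := Rmin_r d1 d2).
    replace (Fx s' t') with (Fx s0 t + (Fx s' t' - Fx s0 t)) by ring.
    replace (Fy s' t') with (Fy s0 t + (Fy s' t' - Fy s0 t)) by ring.
    replace (Fx s0 t') with (Fx s0 t + (Fx s0 t' - Fx s0 t)) by ring.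
    replace (Fy s0 t') with (Fy s0 t + (Fy s0 t' - Fy s0 t)) by ring.
    assert (Z : Rabs (s0 - s0) < Rmin d1 d2) by (rewrite Rminus_diag, Rabs_R0; apply Rmin_glb_lt; lra).
    apply near_pos with e; auto.
    apply D1; auto; lra. apply D2; auto; lra. apply D1; auto; lra. apply D2; auto; lra. }
  exists e. split; auto. intros s Hs Hss0 ths th0 [Cs Ls] [C0 L0].
  set (c := clamp 0 P).
  set (Pre := fun u => Fx s u * Fx s0 u + Fy s u * Fy s0 u).
  set (Pim := fun u => Fy s u * Fx s0 u - Fx s u * Fy s0 u).
  assert (HPre : forall t, 0 < Pre (c t)).
  { intro t. unfold Pre. apply Hu; auto. apply clamp_in. lra. }
  set (psi := fun t => atan (Pim (c t) / Pre (c t))).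
  assert (Cpsi : continuity psi).
  { intro t. unfold psi. apply cp_atan. apply cp_div; [| |apply Rgt_not_eq, HPre].
    - unfold Pim. apply cp_minus; apply cp_mult; apply cp_comp; try apply clamp_cont;
      apply cont01_slice; auto.
    - unfold Pre. apply cp_plus; apply cp_mult; apply cp_comp; try apply clamp_cont;
      apply cont01_slice; auto. }
  assert (Lpsi : forall t, 0 <= t <= P -> pm (Fx s t) (Fy s t) (th0 t + psi t)).
  { intros t Ht. unfold psi. assert (Hct : c t = t) by (apply clamp_id; lra). rewrite Hct.
    apply pm_transfer. apply L0; auto. specialize (HPre t). rewrite Hct in HPre. exact HPre. }
  assert (E := lift_uniq (Fx s) (Fy s) 0 P ths (fun t => th0 t + psi t) ltac:(lra) Cs
     ltac:(intro x; apply cp_plus; auto) Ls Lpsi P 0 ltac:(lra) ltac:(lra)).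
  assert (Hpsi : psi P = psi 0).
  { unfold psi, c. rewrite (clamp_id 0 P P), (clamp_id 0 P 0) by lra.
    unfold Pim, Pre. replace P with (0 + P) at 1 2 3 4 5 6 7 8 by ring.
    destruct (Hper s 0 Hs) as [-> ->]. destruct (Hper s0 0 Hs0) as [-> ->]. reflexivity. }
  lra.
Qed.

Theorem inv_wind th0 th1 : liftP 0 th0 -> liftP 1 th1 -> th1 P - th1 0 = th0 P - th0 0.
Proof.
  intros L0 L1.
  assert (H : forall x, 0 <= x <= 1 -> forall th, liftP x th -> th P - th 0 = th0 P - th0 0).
  { intros x Hx. apply (creep 0 x (fun x => forall th, liftP x th -> th P - th 0 = th0 P - th0 0)); try lra.
    - intros th Lth. destruct L0 as [C0 L0']. destruct Lth as [C L].
      assert (E := lift_uniq (Fx 0) (Fy 0) 0 P th th0 ltac:(lra) C C0 L L0' P 0 ltac:(lra) ltac:(lra)). lra.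
    - intros x' Hx'. destruct (inv_local x' ltac:(lra)) as [e [He Hl]]. exists e. split; auto.
      intros y z Hy Hyz Hz Hay Hzb Py th Lth.
      destruct (liftP_ex x' ltac:(lra)) as [thx Lx].
      destruct (liftP_ex y ltac:(lra)) as [thy Ly].
      rewrite (Hl z ltac:(lra) ltac:(apply Rabs_def1; lra) th thx Lth Lx).
      rewrite <- (Hl y ltac:(lra) ltac:(apply Rabs_def1; lra) thy thx Ly Lx).
      apply Py; auto. }
  apply (H 1); auto. lra.
Qed.
End Inv.
Lemma V3_eta (v : V3) : v = (v3x v, v3y v, v3z v).
Proof. destruct v as [[a b] c]. reflexivity. Qed.

Lemma sqrt_eq1 y : 0 <= y -> sqrt y = 1 -> y = 1.
Proof. intros Hy H. rewrite <- (sqrt_sqrt y Hy), H. ring. Qed.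

Lemma dot3_pos v : 0 <= dot3 v v.
Proof. unfold dot3. nra. Qed.

Lemma onS2_dot x : on_S2 x -> dot3 x x = 1.
Proof. unfold on_S2, norm3. intros H. apply sqrt_eq1; auto. apply dot3_pos. Qed.

Lemma Derive_per f P t : (forall u, f (u + P) = f u) -> Derive f (t + P) = Derive f t.
Proof.
  intros H. unfold Derive. f_equal. apply Lim_ext. intro h.
  replace (t + P + h) with ((t + h) + P) by ring. rewrite !H. reflexivity.
Qed.

Lemma dcurve_per c P t : (forall u, c (u + P) = c u) -> dcurve c (t + P) = dcurve c t.
Proof.
  intros H. unfold dcurve.
  rewrite (Derive_per (fun s => v3x (c s))), (Derive_per (fun s => v3y (c s))), (Derive_per (fun s => v3z (c s)));
  auto; intro u; rewrite H; auto.
Qed.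

Lemma ut_per c P t : (forall u, c (u + P) = c u) -> unit_tangent c (t + P) = unit_tangent c t.
Proof. intros H. unfold unit_tangent. rewrite dcurve_per; auto. Qed.

Lemma smooth_exd f t : smooth_fun f -> ex_derive f t.
Proof. intros H. exact (H 0%nat t). Qed.

Lemma smooth_cont f : smooth_fun f -> continuity f.
Proof. intros H t. apply exd_cpt. apply smooth_exd; auto. Qed.

Lemma closed_orth c t : closed_immersed_S2 c -> dot3 (c t) (dcurve c t) = 0.
Proof.
  intros [HS [_ [S1 [S2 [S3 _]]]]].
  set (f1 := fun s => v3x (c s)). set (f2 := fun s => v3y (c s)). set (f3 := fun s => v3z (c s)).
  assert (E : Derive (fun u => f1 u * f1 u + f2 u * f2 u + f3 u * f3 u) t =
     2 * (f1 t * Derive f1 t + f2 t * Derive f2 t + f3 t * Derive f3 t)).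
  { apply is_derive_unique. auto_derive.
    - repeat split; apply smooth_exd; auto.
    - change (fun x : R => f1 x) with f1. change (fun x : R => f2 x) with f2. change (fun x : R => f3 x) with f3.
      simpl. ring. }
  assert (E2 : Derive (fun u => f1 u * f1 u + f2 u * f2 u + f3 u * f3 u) t = 0).
  { replace (fun u => f1 u * f1 u + f2 u * f2 u + f3 u * f3 u) with (fun _ : R => 1).
    apply Derive_const. apply functional_extensionality. intro u.
    symmetry. apply (onS2_dot (c u)). apply HS. }
  change (f1 t * Derive f1 t + f2 t * Derive f2 t + f3 t * Derive f3 t = 0). lra.
Qed.

Lemma dcurve_nz_pos v : v <> (0, 0, 0) -> 0 < dot3 v v.
Proof.
  destruct v as [[a b] c]. unfold dot3; simpl. intros H.
  destruct (Rlt_le_dec 0 (a * a + b * b + c * c)) as [Hp|Hp]; auto.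
  exfalso. assert (a = 0) by nra. assert (b = 0) by nra. assert (c = 0) by nra. subst. apply H; reflexivity.
Qed.

Lemma ut_unit c t : dcurve c t <> (0, 0, 0) -> dot3 (unit_tangent c t) (unit_tangent c t) = 1.
Proof.
  intros H. assert (Hp := dcurve_nz_pos _ H). unfold unit_tangent, norm3.
  set (d := dcurve c t) in *. set (N := sqrt (dot3 d d)).
  assert (Hs : 0 < N) by (apply sqrt_lt_R0; auto).
  assert (Hss : N * N = dot3 d d) by (apply sqrt_sqrt; lra).
  transitivity (/ N * / N * dot3 d d). unfold scal3, dot3, v3x, v3y, v3z; cbn [fst snd]; ring.
  rewrite <- Hss. field. lra.
Qed.

Lemma ut_orth c t : closed_immersed_S2 c -> dot3 (c t) (unit_tangent c t) = 0.
Proof.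
  intros Hc. assert (H := closed_orth c t Hc). unfold unit_tangent.
  transitivity (/ norm3 (dcurve c t) * dot3 (c t) (dcurve c t)). unfold scal3, dot3, v3x, v3y, v3z; cbn [fst snd]; ring.
  rewrite H. ring.
Qed.

Lemma dcurve_gamma t : dcurve gamma t = (- sin t, cos t, 0).
Proof.
  unfold dcurve, gamma, v3x, v3y, v3z; cbn [fst snd]. f_equal; [f_equal|].
  - apply is_derive_unique. auto_derive; auto. ring.
  - apply is_derive_unique. auto_derive; auto. ring.
  - apply Derive_const.
Qed.

Lemma ut_gamma t : unit_tangent gamma t = (- sin t, cos t, 0).
Proof.
  unfold unit_tangent. rewrite dcurve_gamma. unfold norm3, dot3, scal3, v3x, v3y, v3z; cbn [fst snd].
  replace (- sin t * - sin t + cos t * cos t + 0 * 0) with 1 by (rewrite <- (sc1 t); ring).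
  rewrite sqrt_1, Rinv_1. f_equal; [f_equal|]; ring.
Qed.

Lemma sq_zero a b : a * a + b * b <= 0 -> a = 0 /\ b = 0.
Proof.
  intros H. assert (Ha : a * a = 0) by (assert (0 <= a*a) by apply Rle_0_sqr; assert (0 <= b*b) by apply Rle_0_sqr; lra).
  assert (Hb : b * b = 0) by (assert (0 <= a*a) by apply Rle_0_sqr; assert (0 <= b*b) by apply Rle_0_sqr; lra).
  split; [destruct (Rmult_integral _ _ Ha)|destruct (Rmult_integral _ _ Hb)]; auto.
Qed.

Definition Wx (x u : V3) := v3x x - v3y u.
Definition Wy (x u : V3) := v3y x + v3x u.

Lemma W_nonzero x u : dot3 x x = 1 -> dot3 u u = 1 -> dot3 x u = 0 -> ~ in_lift_gamma x u ->
  0 < Wx x u * Wx x u + Wy x u * Wy x u.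
Proof.
  intros Hx Hu Hxu Hn. destruct (Rlt_le_dec 0 (Wx x u * Wx x u + Wy x u * Wy x u)) as [H|H]; auto.
  exfalso. apply Hn. destruct x as [[x1 x2] x3]. destruct u as [[u1 u2] u3].
  unfold Wx, Wy, dot3, v3x, v3y, v3z in *; cbn [fst snd] in *.
  destruct (sq_zero _ _ H) as [E1 E2].
  assert (x1 = u2) by lra. assert (x2 = - u1) by lra. subst x1 x2.
  assert (Z1 : x3 * u3 = 0) by nra. assert (Z2 : x3 * x3 = u3 * u3) by nra.
  assert (Z3 : x3 * x3 * (x3 * x3) = 0) by (rewrite Z2 at 2; replace (x3 * x3 * (u3 * u3)) with ((x3 * u3) * (x3 * u3)) by ring; rewrite Z1; ring).
  assert (Z4 : x3 * x3 = 0). { destruct (Rmult_integral _ _ Z3); auto. }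
  assert (x3 = 0). { destruct (Rmult_integral _ _ Z4); auto. }
  subst x3. assert (Z5 : u3 * u3 = 0) by lra. assert (u3 = 0). { destruct (Rmult_integral _ _ Z5); auto. }
  subst u3.
  destruct (pm_exists u2 (-u1) ltac:(nra)) as [a [r [Hr [H1 H2]]]].
  assert (Hr1 : r * r = 1). { rewrite (pm_r _ _ _ _ Hr H1 H2). nra. }
  assert (r = 1) by nra. subst r.
  exists a. unfold tangent_lift. rewrite ut_gamma. unfold gamma.
  replace u2 with (cos a) by lra. replace u1 with (- sin a) by lra.
  f_equal; f_equal; try f_equal; ring.
Qed.
Lemma eta_form eta : unit_normal_field_gamma eta ->
  exists sg, (sg = 1 \/ sg = -1) /\ forall t, eta t = (0, 0, sg).
Proof.
  intros [H1 [H2 [H3 [_ [_ [_ S3]]]]]].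
  assert (Hpt : forall t, v3x (eta t) = 0 /\ v3y (eta t) = 0 /\ (v3z (eta t) = 1 \/ v3z (eta t) = -1)).
  { intro t. specialize (H1 t). specialize (H2 t). specialize (H3 t).
    rewrite dcurve_gamma in H2. unfold gamma in H1.
    unfold norm3 in H3. apply sqrt_eq1 in H3; [|apply dot3_pos].
    destruct (eta t) as [[e1 e2] e3]. unfold dot3, v3x, v3y, v3z in *. cbn [fst snd] in *.
    assert (Hs := sc1 t).
    assert (E1 : e1 = cos t * (e1 * cos t + e2 * sin t + e3 * 0) - sin t * (e1 * - sin t + e2 * cos t + e3 * 0)).
    { transitivity (e1 * (sin t * sin t + cos t * cos t)). rewrite Hs; ring. ring. }
    assert (E2 : e2 = sin t * (e1 * cos t + e2 * sin t + e3 * 0) + cos t * (e1 * - sin t + e2 * cos t + e3 * 0)).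
    { transitivity (e2 * (sin t * sin t + cos t * cos t)). rewrite Hs; ring. ring. }
    rewrite H1, H2 in E1, E2. rewrite E1, E2 in H3.
    assert (Z : (e3 - 1) * (e3 + 1) = 0) by lra.
    split; [lra|split; [lra|]]. destruct (Rmult_integral _ _ Z); [left|right]; lra. }
  exists (v3z (eta 0)). split. apply Hpt.
  assert (Hc := pm1_const (fun t => v3z (eta t)) (smooth_cont _ S3) (fun t => proj2 (proj2 (Hpt t)))).
  intro t. rewrite (V3_eta (eta t)). destruct (Hpt t) as [-> [-> _]]. rewrite (Hc t). reflexivity.
Qed.

Section Model.
Variables (sg P Q e : R).
Hypothesis Hsg : sg * sg = 1.

Definition mm t := e * sin (Q * t).
Definition mp t := e * Q * cos (Q * t).
Definition mdl t : V3 := (cos (mm t) * cos (P * t), cos (mm t) * sin (P * t), sg * sin (mm t)).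

Lemma sat_model_eq eta p q t : (forall u, eta u = (0, 0, sg)) -> P = INR p -> Q = INR q ->
  sat_model eta p q e t = mdl t.
Proof.
  intros He HP HQ. unfold sat_model, mdl, mm. rewrite He, <- HP, <- HQ.
  set (m := e * sin (Q * t)).
  unfold expS2, scal3, norm3, dot3, gamma, add3, v3x, v3y, v3z; cbn [fst snd].
  replace (m * 0 * (m * 0) + m * 0 * (m * 0) + m * sg * (m * sg)) with (m²)
    by (unfold Rsqr; transitivity (m * m * (sg * sg)); [rewrite Hsg|]; ring).
  rewrite sqrt_Rsqr_abs.
  destruct (Req_EM_T (Rabs m) 0) as [H0|H0].
  - assert (m = 0). { destruct (Rcase_abs m); unfold Rabs in H0; destruct (Rcase_abs m); lra. }
    rewrite H. rewrite cos_0, sin_0. f_equal; [f_equal|]; ring.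
  - assert (Hm : m <> 0) by (intro Hz; apply H0; rewrite Hz, Rabs_R0; reflexivity).
    assert (Hc : cos (Rabs m) = cos m) by (unfold Rabs; destruct (Rcase_abs m); [rewrite cos_neg|]; auto).
    assert (Hs : sin (Rabs m) / Rabs m * (m * sg) = sg * sin m).
    { unfold Rabs; destruct (Rcase_abs m); [rewrite sin_neg|]; field; lra. }
    rewrite Hc. f_equal; [f_equal|].
    + ring.
    + ring.
    + rewrite <- Hs. ring.
Qed.

Definition d1 t := - sin (mm t) * mp t * cos (P * t) - P * cos (mm t) * sin (P * t).
Definition d2 t := - sin (mm t) * mp t * sin (P * t) + P * cos (mm t) * cos (P * t).
Definition d3 t := sg * cos (mm t) * mp t.

Lemma dcurve_mdl t : dcurve mdl t = (d1 t, d2 t, d3 t).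
Proof.
  unfold dcurve, mdl, d1, d2, d3, mm, mp, v3x, v3y, v3z; cbn [fst snd].
  f_equal; [f_equal|]; apply is_derive_unique; auto_derive; auto; ring.
Qed.

Definition NN t := sqrt (mp t * mp t + P * P * (cos (mm t) * cos (mm t))).

Lemma NN_eq t : norm3 (dcurve mdl t) = NN t.
Proof.
  rewrite dcurve_mdl. unfold norm3, NN, dot3, v3x, v3y, v3z; cbn [fst snd]. f_equal.
  unfold d1, d2, d3. assert (H1 := sc1 (P * t)). assert (H2 := sc1 (mm t)).
  transitivity ((mp t * mp t) * (sin (mm t) * sin (mm t))
    * (sin (P * t) * sin (P * t) + cos (P * t) * cos (P * t)) + (sg * sg) * (cos (mm t) * cos (mm t)) * (mp t * mp t)
    + P * P * (cos (mm t) * cos (mm t)) * (sin (P * t) * sin (P * t) + cos (P * t) * cos (P * t))).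
  ring. rewrite Hsg, H1.
  transitivity (mp t * mp t * (sin (mm t) * sin (mm t) + cos (mm t) * cos (mm t)) + P * P * (cos (mm t) * cos (mm t))).
  ring. rewrite H2. ring.
Qed.

Definition Bx t := cos (mm t) - P * cos (mm t) / NN t.
Definition By t := - (mp t * sin (mm t)) / NN t.

Lemma W_mdl t : 0 < NN t ->
  Wx (mdl t) (unit_tangent mdl t) = cos (P * t) * Bx t - sin (P * t) * By t /\
  Wy (mdl t) (unit_tangent mdl t) = sin (P * t) * Bx t + cos (P * t) * By t.
Proof.
  intros HN. unfold unit_tangent. rewrite NN_eq, dcurve_mdl.
  unfold Wx, Wy, scal3, mdl, Bx, By, d1, d2, v3x, v3y, v3z; cbn [fst snd].
  split; field; lra.
Qed.

End Model.
Definition corr (x0 y0 x y : R) := atan ((y * x0 - x * y0) / (x * x0 + y * y0)).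

Lemma pm_corr x0 y0 a x y : pm x0 y0 a -> 0 < x * x0 + y * y0 -> pm x y (a + corr x0 y0 x y).
Proof. apply pm_transfer. Qed.

Lemma cp_corr fx0 fy0 fx fy t : continuity_pt fx0 t -> continuity_pt fy0 t -> continuity_pt fx t -> continuity_pt fy t ->
  0 < fx t * fx0 t + fy t * fy0 t -> continuity_pt (fun u => corr (fx0 u) (fy0 u) (fx u) (fy u)) t.
Proof.
  intros. unfold corr. apply cp_atan. apply cp_div.
  apply cp_minus; apply cp_mult; auto. apply cp_plus; apply cp_mult; auto. lra.
Qed.

Lemma sin_m_pos m : Rabs m <= 1 -> m <> 0 -> 0 < sin m * m.
Proof.
  intros Hm Hn. assert (HPI := PI2_1). apply Rabs_def2b in Hm.
  destruct (Rlt_le_dec 0 m).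
  - assert (0 < sin m) by (apply sin_gt_0; lra). nra.
  - assert (m < 0) by (destruct (Req_dec m 0); lra).
    assert (0 < sin (- m)) by (apply sin_gt_0; lra). rewrite sin_neg in *. nra.
Qed.

Section ModelWind.
Variables (sg P Q e : R).
Hypothesis Hsg : sg * sg = 1.
Hypothesis HP : 0 < P.
Hypothesis HQ0 : 0 <= Q.
Hypothesis HQn : exists q : nat, Q = INR q.
Hypothesis He : 0 < e <= 1.
Hypothesis HB : forall t, 0 < Bx P Q e t * Bx P Q e t + By P Q e t * By P Q e t.

Lemma mm_bound t : Rabs (mm Q e t) <= 1.
Proof. unfold mm. apply Rabs_le. assert (H := SIN_bound (Q * t)). nra. Qed.

Lemma cm_pos t : 0 < cos (mm Q e t).
Proof.
  assert (H := mm_bound t). apply Rabs_def2b in H. assert (HPI := PI2_1). apply cos_gt_0; lra.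
Qed.

Lemma NN_sq t : NN P Q e t * NN P Q e t = mp Q e t * mp Q e t + P * P * (cos (mm Q e t) * cos (mm Q e t)).
Proof. unfold NN. apply sqrt_sqrt. assert (H := cm_pos t).
  assert (0 <= mp Q e t * mp Q e t) by apply Rle_0_sqr.
  assert (0 < P * P * (cos (mm Q e t) * cos (mm Q e t))) by (repeat apply Rmult_lt_0_compat; lra). lra. Qed.

Lemma NN_pos t : 0 < NN P Q e t.
Proof. unfold NN. apply sqrt_lt_R0. assert (H := cm_pos t).
  assert (0 <= mp Q e t * mp Q e t) by apply Rle_0_sqr.
  assert (0 < P * P * (cos (mm Q e t) * cos (mm Q e t))) by (repeat apply Rmult_lt_0_compat; lra). lra. Qed.

Lemma key t : mm Q e t = 0 -> mp Q e t <> 0.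
Proof.
  intros Hm Hp. assert (H := HB t). unfold Bx, By in H. rewrite Hm, Hp, cos_0, sin_0 in H.
  assert (HN := NN_sq t). rewrite Hm, Hp, cos_0 in HN.
  assert (HNp := NN_pos t).
  assert (NN P Q e t = P) by nra. rewrite H0 in H.
  replace (1 - P * 1 / P) with 0 in H by (field; lra).
  replace (- (0 * 0) / P) with 0 in H by (field; lra). lra.
Qed.

Lemma Qpos : 0 < Q.
Proof.
  destruct HQ0 as [H|H]; auto. exfalso. apply (key 0).
  unfold mm. rewrite Rmult_0_r, sin_0. ring.
  unfold mp. rewrite <- H. ring.
Qed.

Definition Z3x t := e * sin (Q * t).
Definition Z3y t := e * cos (Q * t).
Definition Z2x t := mm Q e t.
Definition Z2y t := mp Q e t / P.
Definition Z1x t := sin (mm Q e t).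
Definition Z1y t := mp Q e t / P.
Definition B1x t := - (Z1x t * Z1x t - Z1y t * Z1y t).
Definition B1y t := - (Z1x t * Z1y t + Z1y t * Z1x t).

Definition al3 t := PI / 2 - Q * t.
Definition al2 t := al3 t + corr (Z3x t) (Z3y t) (Z2x t) (Z2y t).
Definition al1 t := al2 t + corr (Z2x t) (Z2y t) (Z1x t) (Z1y t).
Definition alB t := al1 t + al1 t + PI + corr (B1x t) (B1y t) (Bx P Q e t) (By P Q e t).
Definition alW t := alB t + P * t.

Lemma pos23 t : 0 < Z2x t * Z3x t + Z2y t * Z3y t.
Proof.
  unfold Z2x, Z2y, Z3x, Z3y, mm, mp. assert (HQ := Qpos). assert (Hs := sc1 (Q * t)).
  set (s := sin (Q * t)) in *. set (c := cos (Q * t)) in *.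
  replace (e * s * (e * s) + e * Q * c / P * (e * c)) with (e * e * (s * s + (Q / P) * (c * c))) by (field; lra).
  assert (0 < Q / P) by (apply Rdiv_lt_0_compat; lra).
  apply Rmult_lt_0_compat. nra.
  destruct (Req_dec s 0) as [H0|H0]. rewrite H0 in *. nra.
  assert (0 < s * s) by (apply Rsqr_pos_lt in H0; unfold Rsqr in H0; lra). nra.
Qed.

Lemma pos12 t : 0 < Z1x t * Z2x t + Z1y t * Z2y t.
Proof.
  unfold Z1x, Z1y, Z2x, Z2y. destruct (Req_dec (mm Q e t) 0) as [H0|H0].
  - assert (Hk := key t H0). rewrite H0, sin_0.
    assert (0 < mp Q e t / P * (mp Q e t / P)).
    { assert (mp Q e t / P <> 0) by (unfold Rdiv; apply Rmult_integral_contrapositive; split; auto; apply Rinv_neq_0_compat; lra).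
      apply Rsqr_pos_lt in H. unfold Rsqr in H. lra. }
    lra.
  - assert (H := sin_m_pos _ (mm_bound t) H0). assert (0 <= mp Q e t / P * (mp Q e t / P)) by apply Rle_0_sqr. lra.
Qed.

Lemma posB t : 0 < Bx P Q e t * B1x t + By P Q e t * B1y t.
Proof.
  assert (HN := NN_sq t). assert (HNp := NN_pos t). assert (Hc := cm_pos t). assert (Hsc := sc1 (mm Q e t)).
  assert (Hb := HB t). unfold Bx, By in *. unfold B1x, B1y, Z1x, Z1y.
  set (N := NN P Q e t) in *. set (m := mm Q e t) in *. set (mq := mp Q e t) in *.
  set (cm := cos m) in *. set (sm := sin m) in *.
  assert (K : mq * mq - P * P * (sm * sm) = (N - P) * (N + P)).
  { replace (sm * sm) with (1 - cm * cm) by lra. transitivity (N * N - P * P). rewrite HN. ring. ring. }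
  assert (E : (cm - P * cm / N) * - (sm * sm - mq / P * (mq / P)) + - (mq * sm) / N * - (sm * (mq / P) + mq / P * sm)
     = (cm * (N - P) * (mq * mq - P * P * (sm * sm)) + 2 * P * (mq * sm) * (mq * sm)) / (N * P * P)).
  { field. split; apply Rgt_not_eq; assumption. }
  rewrite K in E.
  replace (cm * (N - P) * ((N - P) * (N + P))) with (cm * (N - P) * (N - P) * (N + P)) in E by ring.
  rewrite E. apply Rdiv_lt_0_compat; [|assert (0 < N * P) by nra; nra].
  assert (A1 : 0 <= cm * (N - P) * (N - P) * (N + P)).
  { assert (0 <= (N - P) * (N - P)) by apply Rle_0_sqr. assert (0 < cm * (N + P)) by nra. nra. }
  assert (A2 : 0 <= 2 * P * (mq * sm) * (mq * sm)).
  { assert (0 <= (mq * sm) * (mq * sm)) by apply Rle_0_sqr. nra. }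
  destruct (Rlt_le_dec 0 (cm * (N - P) * (N - P) * (N + P) + 2 * P * (mq * sm) * (mq * sm))) as [H|H]; auto.
  exfalso.
  assert (Z1 : (N - P) * (N - P) = 0).
  { assert (Z : cm * (N - P) * (N - P) * (N + P) = 0) by lra.
    replace (cm * (N - P) * (N - P) * (N + P)) with ((N - P) * (N - P) * (cm * (N + P))) in Z by ring.
    destruct (Rmult_integral _ _ Z); auto. nra. }
  assert (Z2 : (mq * sm) * (mq * sm) = 0) by nra.
  assert (N = P). { destruct (Rmult_integral _ _ Z1); lra. }
  assert (mq * sm = 0). { destruct (Rmult_integral _ _ Z2); lra. }
  rewrite H0, H1 in Hb. replace (cm - P * cm / P) with 0 in Hb by (field; lra).
  replace (- 0 / P) with 0 in Hb by (field; lra). lra.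
Qed.

Lemma lift_al3 t : pm (Z3x t) (Z3y t) (al3 t).
Proof. exists e. unfold al3, Z3x, Z3y. rewrite cos_shift, sin_shift. repeat split; auto; lra. Qed.

Lemma lift_al2 t : pm (Z2x t) (Z2y t) (al2 t).
Proof. apply pm_corr. apply lift_al3. apply pos23. Qed.

Lemma lift_al1 t : pm (Z1x t) (Z1y t) (al1 t).
Proof. apply pm_corr. apply lift_al2. apply pos12. Qed.

Lemma lift_B1 t : pm (B1x t) (B1y t) (al1 t + al1 t + PI).
Proof.
  assert (H := pm_rot _ _ _ PI (pm_mul _ _ _ _ _ _ (lift_al1 t) (lift_al1 t))).
  rewrite cos_PI, sin_PI in H. eapply pm_ext. exact H. unfold B1x; ring. unfold B1y; ring.
Qed.

Lemma lift_alB t : pm (Bx P Q e t) (By P Q e t) (alB t).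
Proof. apply pm_corr. apply lift_B1. apply posB. Qed.

Lemma lift_alW t : pm (cos (P * t) * Bx P Q e t - sin (P * t) * By P Q e t)
  (sin (P * t) * Bx P Q e t + cos (P * t) * By P Q e t) (alW t).
Proof. apply pm_rot. apply lift_alB. Qed.

Ltac cpt0 := repeat first [ apply cp_const | apply cp_id | apply cp_plus | apply cp_minus | apply cp_mult
  | apply cp_opp | apply cp_div | apply cp_cos | apply cp_sin | apply cp_atan ].

Lemma NNarg_pos t : 0 < mp Q e t * mp Q e t + P * P * (cos (mm Q e t) * cos (mm Q e t)).
Proof. assert (H := cm_pos t).
  assert (0 <= mp Q e t * mp Q e t) by apply Rle_0_sqr.
  assert (0 < P * P * (cos (mm Q e t) * cos (mm Q e t))) by (repeat apply Rmult_lt_0_compat; lra). lra. Qed.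

Lemma c_mm : continuity (mm Q e).
Proof. intro t. unfold mm. cpt0. Qed.
Lemma c_mp : continuity (mp Q e).
Proof. intro t. unfold mp. cpt0. Qed.
Lemma c_NN : continuity (NN P Q e).
Proof. intro t. unfold NN. apply cp_sqrt. apply cp_plus; apply cp_mult; try apply c_mp; cpt0; apply c_mm.
  apply NNarg_pos. Qed.
Lemma c_Bx : continuity (Bx P Q e).
Proof. intro t. unfold Bx. apply cp_minus. apply cp_cos, c_mm. apply cp_div. apply cp_mult. apply cp_const.
  apply cp_cos, c_mm. apply c_NN. apply Rgt_not_eq, NN_pos. Qed.
Lemma c_By : continuity (By P Q e).
Proof. intro t. unfold By. apply cp_div. apply cp_opp, cp_mult. apply c_mp. apply cp_sin, c_mm. apply c_NN.
  apply Rgt_not_eq, NN_pos. Qed.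
Lemma c_Z3x : continuity Z3x. Proof. intro t. unfold Z3x. cpt0. Qed.
Lemma c_Z3y : continuity Z3y. Proof. intro t. unfold Z3y. cpt0. Qed.
Lemma c_Z2x : continuity Z2x. Proof. intro t. apply c_mm. Qed.
Lemma c_Z2y : continuity Z2y. Proof. intro t. unfold Z2y. apply cp_div. apply c_mp. apply cp_const. lra. Qed.
Lemma c_Z1x : continuity Z1x. Proof. intro t. unfold Z1x. apply cp_sin, c_mm. Qed.
Lemma c_Z1y : continuity Z1y. Proof. exact c_Z2y. Qed.
Lemma c_B1x : continuity B1x. Proof. intro t. unfold B1x. apply cp_opp, cp_minus; apply cp_mult; try apply c_Z1x; apply c_Z1y. Qed.
Lemma c_B1y : continuity B1y. Proof. intro t. unfold B1y. apply cp_opp, cp_plus; apply cp_mult; try apply c_Z1x; apply c_Z1y. Qed.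

Lemma c_alW : continuity alW.
Proof.
  assert (C3 : continuity al3). { intro t. unfold al3. cpt0. }
  assert (C2 : continuity al2). { intro t. unfold al2. apply cp_plus. apply C3.
    apply cp_corr; try apply pos23; [apply c_Z3x|apply c_Z3y|apply c_Z2x|apply c_Z2y]. }
  assert (C1 : continuity al1). { intro t. unfold al1. apply cp_plus. apply C2.
    apply cp_corr; try apply pos12; [apply c_Z2x|apply c_Z2y|apply c_Z1x|apply c_Z1y]. }
  assert (CB : continuity alB). { intro t. unfold alB. apply cp_plus. apply cp_plus. apply cp_plus; apply C1. apply cp_const.
    apply cp_corr; try apply posB; [apply c_B1x|apply c_B1y|apply c_Bx|apply c_By]. }
  intro t. unfold alW. apply cp_plus. apply CB. cpt0.
Qed.

Lemma S2pi : sin (Q * (2 * PI)) = sin (Q * 0).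
Proof. destruct HQn as [q ->]. rewrite Rmult_0_r. rewrite <- (sin_period 0 q). f_equal. ring. Qed.
Lemma C2pi : cos (Q * (2 * PI)) = cos (Q * 0).
Proof. destruct HQn as [q ->]. rewrite Rmult_0_r. rewrite <- (cos_period 0 q). f_equal. ring. Qed.

Lemma alW_wind : alW (2 * PI) - alW 0 = 2 * PI * P - 4 * PI * Q.
Proof.
  unfold alW, alB, al1, al2, al3, B1x, B1y, Z1x, Z1y, Z2x, Z2y, Z3x, Z3y, Bx, By, NN, mm, mp.
  rewrite S2pi, C2pi. ring.
Qed.
End ModelWind.
Lemma c01_comp_pt h F : (forall s t, 0 <= s <= 1 -> continuity_pt h (F s t)) -> cont01 F ->
  cont01 (fun s t => h (F s t)).
Proof.
  intros Hh HF s t Hs e He. destruct (cpt_ed _ _ (Hh s t Hs) e He) as [d [Hd D]].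
  destruct (HF s t Hs d Hd) as [d' [Hd' D']]. exists d'. split; [exact Hd'|].
  intros s' t' Hs' H1 H2. apply D. apply D'; auto.
Qed.

Lemma c01_comp h F : continuity h -> cont01 F -> cont01 (fun s t => h (F s t)).
Proof. intros Hh. apply c01_comp_pt. intros; apply Hh. Qed.

Lemma c01_t g : continuity g -> cont01 (fun s t => g t).
Proof.
  intros Hg s t Hs e He. destruct (cpt_ed _ _ (Hg t) e He) as [d [Hd D]].
  exists d. split; [exact Hd|]. intros. apply D. auto.
Qed.

Lemma c01_s : cont01 (fun s t => s).
Proof. intros s t Hs e He. exists e. split; auto. Qed.

Lemma c01_const c : cont01 (fun s t => c).
Proof. intros s t Hs e He. exists 1. split. lra. intros. rewrite Rminus_diag, Rabs_R0; auto. Qed.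

Lemma c01_plus F G : cont01 F -> cont01 G -> cont01 (fun s t => F s t + G s t).
Proof.
  intros HF HG s t Hs e He.
  destruct (HF s t Hs (e/2) ltac:(lra)) as [d1 [Hd1 D1]].
  destruct (HG s t Hs (e/2) ltac:(lra)) as [d2 [Hd2 D2]].
  exists (Rmin d1 d2). split. apply Rmin_glb_lt; lra.
  intros s' t' Hs' H1 H2. assert (Hm1 := Rmin_l d1 d2). assert (Hm2 := Rmin_r d1 d2).
  replace (F s' t' + G s' t' - (F s t + G s t)) with ((F s' t' - F s t) + (G s' t' - G s t)) by ring.
  eapply Rle_lt_trans. apply Rabs_triang.
  assert (Rabs (F s' t' - F s t) < e/2) by (apply D1; auto; lra).
  assert (Rabs (G s' t' - G s t) < e/2) by (apply D2; auto; lra). lra.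
Qed.

Lemma c01_opp F : cont01 F -> cont01 (fun s t => - F s t).
Proof. intros HF. apply (c01_comp (fun x => - x)). intro x. apply cp_opp, cp_id. auto. Qed.

Lemma c01_minus F G : cont01 F -> cont01 G -> cont01 (fun s t => F s t - G s t).
Proof. intros. unfold Rminus. apply c01_plus; auto. apply c01_opp; auto. Qed.

Lemma c01_mult F G : cont01 F -> cont01 G -> cont01 (fun s t => F s t * G s t).
Proof.
  intros HF HG.
  assert (E : (fun s t => F s t * G s t) =
    (fun s t => (fun x => x * x / 4) (F s t + G s t) - (fun x => x * x / 4) (F s t - G s t))).
  { apply functional_extensionality; intro s; apply functional_extensionality; intro t. field. }
  assert (Hq : continuity (fun x => x * x / 4)).
  { intro x; unfold Rdiv; apply cp_mult; [apply cp_mult; apply cp_id| apply cp_const]. }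
  rewrite E. apply c01_minus.
  - apply (c01_comp (fun x => x * x / 4)); auto. apply c01_plus; auto.
  - apply (c01_comp (fun x => x * x / 4)); auto. apply c01_minus; auto.
Qed.

Lemma c01_div F G : cont01 F -> cont01 G -> (forall s t, 0 <= s <= 1 -> G s t <> 0) ->
  cont01 (fun s t => F s t / G s t).
Proof.
  intros HF HG Hn. unfold Rdiv. apply c01_mult; auto.
  apply (c01_comp_pt Rinv G); auto. intros s t Hs. apply (cp_inv (fun x => x)). apply cp_id. auto.
Qed.

Lemma c01_sqrt F : cont01 F -> (forall s t, 0 <= s <= 1 -> 0 < F s t) -> cont01 (fun s t => sqrt (F s t)).
Proof. intros HF Hp. apply (c01_comp_pt sqrt F); auto. intros. apply sqrt_continuity_pt. auto. Qed.

Lemma c01_cos F : cont01 F -> cont01 (fun s t => cos (F s t)).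
Proof. intros. apply (c01_comp cos); auto. apply continuity_cos. Qed.
Lemma c01_sin F : cont01 F -> cont01 (fun s t => sin (F s t)).
Proof. intros. apply (c01_comp sin); auto. apply continuity_sin. Qed.

Lemma sin_piZ (n : Z) : sin (IZR n * PI) = 0.
Proof. apply sin_eq_0_1. exists n. reflexivity. Qed.

Lemma cos_2piZ x (n : Z) : cos (x + 2 * PI * IZR n) = cos x /\ sin (x + 2 * PI * IZR n) = sin x.
Proof.
  assert (S : sin (2 * PI * IZR n) = 0).
  { replace (2 * PI * IZR n) with (IZR (2 * n) * PI) by (rewrite mult_IZR; ring). apply sin_piZ. }
  assert (C : cos (2 * PI * IZR n) = 1).
  { replace (2 * PI * IZR n) with (2 * (IZR n * PI)) by ring. rewrite cos_2a_sin, sin_piZ. ring. }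
  rewrite cos_plus, sin_plus, S, C. split; ring.
Qed.

Definition opp4 (w : V4) : V4 := let '((a, b), (c, d)) := w in ((-a, -b), (-c, -d)).

Lemma csq_eq a b a' b' : a * a - b * b = a' * a' - b' * b' -> a * b = a' * b' ->
  (a' = a /\ b' = b) \/ (a' = -a /\ b' = -b).
Proof.
  intros H1 H2.
  set (u1 := a' - a). set (u2 := b' - b). set (v1 := a' + a). set (v2 := b' + b).
  assert (E1 : u1 * v1 - u2 * v2 = 0) by (unfold u1, u2, v1, v2; nra).
  assert (E2 : u1 * v2 + u2 * v1 = 0) by (unfold u1, u2, v1, v2; nra).
  assert (E : (u1 * u1 + u2 * u2) * (v1 * v1 + v2 * v2) = 0).
  { transitivity ((u1 * v1 - u2 * v2) * (u1 * v1 - u2 * v2) + (u1 * v2 + u2 * v1) * (u1 * v2 + u2 * v1)).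
    ring. rewrite E1, E2. ring. }
  destruct (Rmult_integral _ _ E) as [Z|Z].
  - left. assert (Z' : u1 * u1 + u2 * u2 <= 0) by lra. destruct (sq_zero _ _ Z'). unfold u1, u2 in *. lra.
  - right. assert (Z' : v1 * v1 + v2 * v2 <= 0) by lra. destruct (sq_zero _ _ Z'). unfold v1, v2 in *. lra.
Qed.

Lemma lmap_inj w w' : lmap w = lmap w' -> w' = w \/ w' = opp4 w.
Proof.
  destruct w as [[a b] [c d]]. destruct w' as [[a' b'] [c' d']]. unfold lmap, opp4.
  intros H. injection H. intros E6 E5 E4 E3 E2 E1.
  assert (F1 : a * a - b * b = a' * a' - b' * b') by lra.
  assert (F2 : a * b = a' * b') by lra.
  assert (F3 : c * c - d * d = c' * c' - d' * d') by lra.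
  assert (F4 : c * d = c' * d') by lra.
  destruct (csq_eq _ _ _ _ F1 F2) as [[-> ->]|[-> ->]];
  destruct (csq_eq _ _ _ _ F3 F4) as [[-> ->]|[-> ->]]; auto.
  - assert (G1 : a * c + b * d = 0) by lra. assert (G2 : b * c - a * d = 0) by lra.
    assert (Z : (a * a + b * b) * (c * c + d * d) = 0).
    { transitivity ((a * c + b * d) * (a * c + b * d) + (b * c - a * d) * (b * c - a * d)). ring.
      rewrite G1, G2. ring. }
    destruct (Rmult_integral _ _ Z) as [Z'|Z'].
    + assert (Z'' : a * a + b * b <= 0) by lra. destruct (sq_zero _ _ Z''). subst. right.
      f_equal; f_equal; ring.
    + assert (Z'' : c * c + d * d <= 0) by lra. destruct (sq_zero _ _ Z''). subst. left.
      f_equal; f_equal; ring.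
  - assert (G1 : a * c + b * d = 0) by lra. assert (G2 : b * c - a * d = 0) by lra.
    assert (Z : (a * a + b * b) * (c * c + d * d) = 0).
    { transitivity ((a * c + b * d) * (a * c + b * d) + (b * c - a * d) * (b * c - a * d)). ring.
      rewrite G1, G2. ring. }
    destruct (Rmult_integral _ _ Z) as [Z'|Z'].
    + assert (Z'' : a * a + b * b <= 0) by lra. destruct (sq_zero _ _ Z''). subst. left.
      f_equal; f_equal; ring.
    + assert (Z'' : c * c + d * d <= 0) by lra. destruct (sq_zero _ _ Z''). subst. right.
      f_equal; f_equal; ring.
Qed.
Section Final.
Variables (sigma : R -> V4) (Th : R -> R) (T W P c1 c2 : R) (n k : Z).
Definition sa t := fst (fst (sigma t)).
Definition sb t := snd (fst (sigma t)).
Definition sc t := fst (snd (sigma t)).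
Definition sd t := snd (snd (sigma t)).
Hypothesis Ca : continuity sa.
Hypothesis Cb : continuity sb.
Hypothesis Cc : continuity sc.
Hypothesis Cd : continuity sd.
Hypothesis HS3 : forall t, on_S3 (sigma t).
Hypothesis CTh : continuity Th.
Hypothesis LTh : forall t, pm (sc t) (sd t) (Th t).
Hypothesis Hsper : forall t, sigma (t + T) = sigma t.
Hypothesis Hthper : forall t, Th (t + T) = Th t + W * T / 2.
Hypothesis Hn : W * T / 2 = 2 * PI * IZR n.
Hypothesis Hk : P * T / 2 = 2 * PI * IZR k.
Hypothesis Hc1 : 0 < c1.
Hypothesis Hc2 : 0 < c2.
Hypothesis Hcc : c1 * c1 + c2 * c2 = 1.

Lemma S3_sum t : sa t * sa t + sb t * sb t + sc t * sc t + sd t * sd t = 1.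
Proof. assert (H := HS3 t). unfold sa, sb, sc, sd. destruct (sigma t) as [[a b] [c d]]. exact H. Qed.

Definition rho t := sqrt (sc t * sc t + sd t * sd t).
Definition ang s t := Th t - s * (Th t - W * t / 2).
Definition A1 s t := (1 - s) * sa t + s * (c1 * cos (P * t / 2)).
Definition A2 s t := (1 - s) * sb t + s * (c1 * sin (P * t / 2)).
Definition Rr s t := (1 - s) * rho t + s * c2.
Definition A3 s t := Rr s t * cos (ang s t).
Definition A4 s t := Rr s t * sin (ang s t).
Definition Sm s t := A1 s t * A1 s t + A2 s t * A2 s t + A3 s t * A3 s t + A4 s t * A4 s t.
Definition Nm s t := sqrt (Sm s t).
Definition Gh s t : V4 := ((A1 s t / Nm s t, A2 s t / Nm s t), (A3 s t / Nm s t, A4 s t / Nm s t)).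

Lemma rho_pos t : 0 < rho t.
Proof. unfold rho. apply sqrt_lt_R0. apply (pm_nz _ _ _ (LTh t)). Qed.

Lemma rho_pm t : sc t = rho t * cos (Th t) /\ sd t = rho t * sin (Th t).
Proof.
  destruct (LTh t) as [r [Hr [E1 E2]]]. assert (E := pm_r _ _ _ _ Hr E1 E2).
  assert (r = rho t). { unfold rho. rewrite <- E. rewrite sqrt_square; lra. }
  subst r. auto.
Qed.

Lemma Rr_pos s t : 0 <= s <= 1 -> 0 < Rr s t.
Proof. intros Hs. unfold Rr. assert (H := rho_pos t). destruct (Req_dec s 0). subst. lra. nra. Qed.

Lemma A34 s t : A3 s t * A3 s t + A4 s t * A4 s t = Rr s t * Rr s t.
Proof. unfold A3, A4. transitivity (Rr s t * Rr s t * (sin (ang s t) * sin (ang s t) + cos (ang s t) * cos (ang s t))). ring. rewrite sc1. ring. Qed.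

Lemma Sm_pos s t : 0 <= s <= 1 -> 0 < Sm s t.
Proof.
  intros Hs. unfold Sm. assert (H := A34 s t). assert (H2 := Rr_pos s t Hs).
  assert (0 <= A1 s t * A1 s t) by apply Rle_0_sqr. assert (0 <= A2 s t * A2 s t) by apply Rle_0_sqr. nra.
Qed.

Lemma Nm_pos s t : 0 <= s <= 1 -> 0 < Nm s t.
Proof. intros. unfold Nm. apply sqrt_lt_R0, Sm_pos; auto. Qed.

Lemma Nm_sq s t : 0 <= s <= 1 -> Nm s t * Nm s t = Sm s t.
Proof. intros. unfold Nm. apply sqrt_sqrt. apply Rlt_le, Sm_pos; auto. Qed.

Lemma Gh_S3 s t : 0 <= s <= 1 -> on_S3 (Gh s t) /\ snd (Gh s t) <> (0, 0).
Proof.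
  intros Hs. assert (HN := Nm_pos s t Hs). assert (HN2 := Nm_sq s t Hs). split.
  - unfold on_S3, Gh. transitivity (Sm s t / (Nm s t * Nm s t)). unfold Sm. field. lra.
    rewrite HN2. field. assert (H := Sm_pos s t Hs). lra.
  - unfold Gh. simpl. intro E. injection E. intros E4 E3.
    assert (Z3 : A3 s t = 0). { apply (Rmult_eq_reg_r (/ Nm s t)). unfold Rdiv in E3. rewrite E3. ring.
      apply Rinv_neq_0_compat. lra. }
    assert (Z4 : A4 s t = 0). { apply (Rmult_eq_reg_r (/ Nm s t)). unfold Rdiv in E4. rewrite E4. ring.
      apply Rinv_neq_0_compat. lra. }
    assert (K := A34 s t). assert (K2 := Rr_pos s t Hs). rewrite Z3, Z4 in K. nra.
Qed.

Lemma Gh_0 t : Gh 0 t = sigma t.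
Proof.
  assert (HS := S3_sum t). destruct (rho_pm t) as [E3 E4].
  assert (ES : Sm 0 t = 1).
  { unfold Sm, A1, A2, A3, A4, Rr, ang.
    replace (Th t - 0 * (Th t - W * t / 2)) with (Th t) by ring.
    transitivity (sa t * sa t + sb t * sb t + sc t * sc t + sd t * sd t); [|exact HS].
    rewrite E3, E4. ring. }
  assert (F1 : A1 0 t = sa t) by (unfold A1; ring).
  assert (F2 : A2 0 t = sb t) by (unfold A2; ring).
  assert (F3 : A3 0 t = sc t).
  { unfold A3, Rr, ang. replace (Th t - 0 * (Th t - W * t / 2)) with (Th t) by ring. rewrite E3. ring. }
  assert (F4 : A4 0 t = sd t).
  { unfold A4, Rr, ang. replace (Th t - 0 * (Th t - W * t / 2)) with (Th t) by ring. rewrite E4. ring. }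
  unfold Gh. unfold Nm. rewrite ES, sqrt_1, F1, F2, F3, F4.
  unfold sa, sb, sc, sd. destruct (sigma t) as [[a b] [c d]]. simpl. f_equal; f_equal; field.
Qed.

Lemma Gh_1 t : Gh 1 t = ((c1 * cos (P * t / 2), c1 * sin (P * t / 2)), (c2 * cos (W * t / 2), c2 * sin (W * t / 2))).
Proof.
  assert (E : ang 1 t = W * t / 2) by (unfold ang; ring).
  assert (ES : Sm 1 t = 1).
  { unfold Sm, A1, A2, A3, A4, Rr. rewrite E. transitivity (c1 * c1 + c2 * c2); [|exact Hcc].
    transitivity (c1 * c1 * (sin (P * t / 2) * sin (P * t / 2) + cos (P * t / 2) * cos (P * t / 2))
      + c2 * c2 * (sin (W * t / 2) * sin (W * t / 2) + cos (W * t / 2) * cos (W * t / 2))). ring.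
    rewrite !sc1. ring. }
  unfold Gh, Nm. rewrite ES, sqrt_1. unfold A1, A2, A3, A4, Rr. rewrite E. f_equal; f_equal; field.
Qed.

Lemma Gh_per s t : Gh s (t + T) = Gh s t.
Proof.
  assert (Ea : sa (t + T) = sa t) by (unfold sa; rewrite Hsper; auto).
  assert (Eb : sb (t + T) = sb t) by (unfold sb; rewrite Hsper; auto).
  assert (Ec : sc (t + T) = sc t) by (unfold sc; rewrite Hsper; auto).
  assert (Ed : sd (t + T) = sd t) by (unfold sd; rewrite Hsper; auto).
  assert (Er : rho (t + T) = rho t) by (unfold rho; rewrite Ec, Ed; auto).
  assert (EP : P * (t + T) / 2 = P * t / 2 + 2 * PI * IZR k) by (rewrite <- Hk; field).
  assert (Eang : ang s (t + T) = ang s t + 2 * PI * IZR n).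
  { unfold ang. rewrite Hthper, <- Hn. field. }
  assert (E1 : A1 s (t + T) = A1 s t).
  { unfold A1. rewrite Ea, EP, (proj1 (cos_2piZ _ _)). auto. }
  assert (E2 : A2 s (t + T) = A2 s t).
  { unfold A2. rewrite Eb, EP, (proj2 (cos_2piZ _ _)). auto. }
  assert (E3 : A3 s (t + T) = A3 s t).
  { unfold A3, Rr. rewrite Er, Eang, (proj1 (cos_2piZ _ _)). auto. }
  assert (E4 : A4 s (t + T) = A4 s t).
  { unfold A4, Rr. rewrite Er, Eang, (proj2 (cos_2piZ _ _)). auto. }
  unfold Gh, Nm, Sm. rewrite E1, E2, E3, E4. reflexivity.
Qed.

Lemma c01_A1 : cont01 A1.
Proof.
  unfold A1. apply c01_plus; apply c01_mult. apply c01_minus. apply c01_const. apply c01_s.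
  apply c01_t; auto. apply c01_s. apply c01_t. intro t. apply cp_mult. apply cp_const.
  apply cp_cos. unfold Rdiv. apply cp_mult. apply cp_mult. apply cp_const. apply cp_id. apply cp_const.
Qed.
Lemma c01_A2 : cont01 A2.
Proof.
  unfold A2. apply c01_plus; apply c01_mult. apply c01_minus. apply c01_const. apply c01_s.
  apply c01_t; auto. apply c01_s. apply c01_t. intro t. apply cp_mult. apply cp_const.
  apply cp_sin. unfold Rdiv. apply cp_mult. apply cp_mult. apply cp_const. apply cp_id. apply cp_const.
Qed.
Lemma c_rho : continuity rho.
Proof. intro t. unfold rho. apply cp_sqrt. apply cp_plus; apply cp_mult; auto. apply (pm_nz _ _ _ (LTh t)). Qed.
Lemma c01_Rr : cont01 Rr.
Proof.
  unfold Rr. apply c01_plus; apply c01_mult. apply c01_minus. apply c01_const. apply c01_s.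
  apply c01_t, c_rho. apply c01_s. apply c01_const.
Qed.
Lemma c01_ang : cont01 ang.
Proof.
  unfold ang. apply c01_minus. apply c01_t; auto. apply c01_mult. apply c01_s. apply c01_t.
  intro t. apply cp_minus. apply CTh. unfold Rdiv. apply cp_mult. apply cp_mult. apply cp_const. apply cp_id. apply cp_const.
Qed.
Lemma c01_A3 : cont01 A3.
Proof. unfold A3. apply c01_mult. apply c01_Rr. apply c01_cos, c01_ang. Qed.
Lemma c01_A4 : cont01 A4.
Proof. unfold A4. apply c01_mult. apply c01_Rr. apply c01_sin, c01_ang. Qed.
Lemma c01_Nm : cont01 Nm.
Proof.
  unfold Nm. apply c01_sqrt. unfold Sm.
  repeat apply c01_plus; apply c01_mult; (apply c01_A1 || apply c01_A2 || apply c01_A3 || apply c01_A4).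
  intros; apply Sm_pos; auto.
Qed.

Theorem final_homotopy : loop_homotopic_S3_minus T sigma
  (fun t => ((c1 * cos (P * t / 2), c1 * sin (P * t / 2)), (c2 * cos (W * t / 2), c2 * sin (W * t / 2)))).
Proof.
  assert (Hnz : forall s t, 0 <= s <= 1 -> Nm s t <> 0) by (intros; apply Rgt_not_eq, Nm_pos; auto).
  exists Gh. split; [|split; [|split; [|split; [|split; [|split; [|split]]]]]].
  - unfold Gh; simpl. apply c01_div; auto. apply c01_A1. apply c01_Nm.
  - unfold Gh; simpl. apply c01_div; auto. apply c01_A2. apply c01_Nm.
  - unfold Gh; simpl. apply c01_div; auto. apply c01_A3. apply c01_Nm.
  - unfold Gh; simpl. apply c01_div; auto. apply c01_A4. apply c01_Nm.
  - apply Gh_0.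
  - apply Gh_1.
  - intros. apply Gh_per.
  - intros. apply Gh_S3; auto.
Qed.
End Final.
Lemma opp4_invol w : opp4 (opp4 w) = w.
Proof. destruct w as [[a b] [c d]]. simpl. f_equal; f_equal; ring. Qed.

Lemma cos_parity p q : cos (PI * (INR p - 2 * INR q)) = if Nat.even p then 1 else -1.
Proof.
  assert (E : cos (PI * (INR p - 2 * INR q)) = cos (PI * INR p)).
  { rewrite <- (cos_period (PI * (INR p - 2 * INR q)) q). f_equal. ring. }
  rewrite E. destruct (Nat.Even_or_Odd p) as [[k Hk]|[k Hk]]; subst p.
  - replace (Nat.even (2 * k)) with true by (symmetry; apply Nat.even_spec; exists k; reflexivity).
    rewrite mult_INR. replace (PI * (INR 2 * INR k)) with (0 + 2 * INR k * PI) by (simpl; ring).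
    rewrite cos_period, cos_0. reflexivity.
  - replace (Nat.even (2 * k + 1)) with false.
    rewrite plus_INR, mult_INR. replace (PI * (INR 2 * INR k + INR 1)) with (PI + 2 * INR k * PI) by (simpl; ring).
    rewrite cos_period, cos_PI. reflexivity.
    symmetry. rewrite <- Nat.negb_odd. rewrite (proj2 (Nat.odd_spec _)). reflexivity. exists k. reflexivity.
Qed.

Lemma sin_phi p q : sin (PI * (INR p - 2 * INR q)) = 0.
Proof.
  replace (PI * (INR p - 2 * INR q)) with (IZR (Z.of_nat p - 2 * Z.of_nat q) * PI).
  apply sin_piZ. rewrite minus_IZR, mult_IZR, <- !INR_IZR_INZ. simpl. ring.
Qed.

Lemma sigma_c (sigma : R -> V4) (c : R -> V3) t : lmap (sigma t) = tangent_lift c t ->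
  Wx (c t) (unit_tangent c t) = 2 * (sc sigma t * sc sigma t - sd sigma t * sd sigma t) /\
  Wy (c t) (unit_tangent c t) = 2 * (sc sigma t * sd sigma t + sd sigma t * sc sigma t).
Proof.
  unfold tangent_lift, sc, sd. destruct (sigma t) as [[a b] [cc dd]]. unfold lmap. intros E.
  assert (E1 := f_equal fst E). assert (E2 := f_equal snd E). cbn [fst snd] in E1, E2.
  rewrite <- E1, <- E2. unfold Wx, Wy, v3x, v3y. simpl. split; ring.
Qed.

Theorem mainTheorem1 :
  forall (p q : nat), (0 < p)%nat -> Nat.gcd p q = 1%nat ->
  forall (eta : R -> V3), unit_normal_field_gamma eta ->
  forall (c : R -> V3), is_satellite eta p q c ->
  forall (sigma : R -> V4),
    continuity (fun t => fst (fst (sigma t))) -> continuity (fun t => snd (fst (sigma t))) ->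
    continuity (fun t => fst (snd (sigma t))) -> continuity (fun t => snd (snd (sigma t))) ->
    (forall t, on_S3 (sigma t)) ->
    (forall t, lmap (sigma t) = tangent_lift c t) ->
  forall (c1 c2 : R), 0 < c1 -> 0 < c2 -> c1 * c1 + c2 * c2 = 1 ->
  let T := if Nat.even p then 2 * PI else 4 * PI in
  (forall t, sigma (t + T) = sigma t) /\
  loop_homotopic_S3_minus T sigma (torus_curve c1 c2 p q).
Proof.
  intros p q Hp Hgcd eta Heta c [Hc [eps0 [Heps0 Hsat]]] sigma Cs1 Cs2 Cs3 Cs4 HS3 Hl c1 c2 Hc1 Hc2 Hcc T.
  set (e := Rmin 1 eps0 / 2).
  assert (He : 0 < e <= 1). { unfold e. assert (H1 := Rmin_l 1 eps0). assert (0 < Rmin 1 eps0) by (apply Rmin_glb_lt; lra). lra. }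
  assert (He0 : 0 < e < eps0). { split. lra. unfold e. assert (H1 := Rmin_r 1 eps0). lra. }
  destruct (Hsat e He0) as [H [HH [H0 [H1 [[CH1 [CH2 CH3]] [[CU1 [CU2 CU3]] Hav]]]]]].
  destruct (eta_form eta Heta) as [sg [Hsg Heq]].
  assert (Hsg2 : sg * sg = 1) by (destruct Hsg; subst; ring).
  set (P := INR p). set (Q := INR q).
  assert (HPpos : 0 < P) by (apply lt_0_INR; lia).
  assert (HQ0 : 0 <= Q) by apply pos_INR.
  assert (EH1 : H 1 = mdl sg P Q e).
  { apply functional_extensionality. intro t. rewrite H1. apply sat_model_eq; auto. }
  assert (EH0 : H 0 = c) by (apply functional_extensionality; apply H0).
  set (Fx := fun s t => Wx (H s t) (unit_tangent (H s) t)).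
  set (Fy := fun s t => Wy (H s t) (unit_tangent (H s) t)).
  assert (CFx : cont01 Fx) by (apply c01_minus; auto).
  assert (CFy : cont01 Fy) by (apply c01_plus; auto).
  assert (Hnz : forall s t, 0 <= s <= 1 -> 0 < Fx s t * Fx s t + Fy s t * Fy s t).
  { intros s t Hs. assert (HHs := HH s Hs). destruct HHs as [HS2 [_ [_ [_ [_ Hd]]]]].
    unfold Fx, Fy. apply W_nonzero.
    apply onS2_dot, HS2. apply ut_unit, Hd. apply ut_orth, HH, Hs. apply Hav, Hs. }
  assert (Hper : forall s t, 0 <= s <= 1 -> Fx s (t + 2 * PI) = Fx s t /\ Fy s (t + 2 * PI) = Fy s t).
  { intros s t Hs. destruct (HH s Hs) as [_ [Hp' _]]. unfold Fx, Fy. rewrite Hp', ut_per; auto. }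
  assert (EF1 : forall t, Fx 1 t = cos (P * t) * Bx P Q e t - sin (P * t) * By P Q e t /\
                          Fy 1 t = sin (P * t) * Bx P Q e t + cos (P * t) * By P Q e t).
  { intro t. unfold Fx, Fy. rewrite EH1. apply W_mdl; auto. apply NN_pos; auto. }
  assert (HB : forall t, 0 < Bx P Q e t * Bx P Q e t + By P Q e t * By P Q e t).
  { intro t. assert (K := Hnz 1 t ltac:(lra)). destruct (EF1 t) as [E1 E2]. rewrite E1, E2 in K.
    replace (Bx P Q e t * Bx P Q e t + By P Q e t * By P Q e t) with
      ((cos (P * t) * Bx P Q e t - sin (P * t) * By P Q e t) * (cos (P * t) * Bx P Q e t - sin (P * t) * By P Q e t) +
       (sin (P * t) * Bx P Q e t + cos (P * t) * By P Q e t) * (sin (P * t) * Bx P Q e t + cos (P * t) * By P Q e t)).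
    exact K.
    transitivity ((Bx P Q e t * Bx P Q e t + By P Q e t * By P Q e t) * (sin (P * t) * sin (P * t) + cos (P * t) * cos (P * t))).
    ring. rewrite sc1. ring. }
  assert (ES : forall t, Fx 0 t = 2 * (sc sigma t * sc sigma t - sd sigma t * sd sigma t) /\
                         Fy 0 t = 2 * (sc sigma t * sd sigma t + sd sigma t * sc sigma t)).
  { intro t. unfold Fx, Fy. rewrite EH0. apply sigma_c. apply Hl. }
  assert (Hz : forall t, 0 < sc sigma t * sc sigma t + sd sigma t * sd sigma t).
  { intro t. destruct (Rlt_le_dec 0 (sc sigma t * sc sigma t + sd sigma t * sd sigma t)) as [K|K]; auto.
    exfalso. destruct (sq_zero _ _ K) as [K1 K2]. assert (K3 := Hnz 0 t ltac:(lra)).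
    destruct (ES t) as [E1 E2]. rewrite E1, E2, K1, K2 in K3. lra. }
  destruct (lift_global (sc sigma) (sd sigma) Cs3 Cs4 Hz) as [Th [CTh LTh]].
  assert (Hwind : alW P Q e (2 * PI) - alW P Q e 0 = (Th (2 * PI) + Th (2 * PI)) - (Th 0 + Th 0)).
  { apply (inv_wind Fx Fy (2 * PI) ltac:(assert (HPI := PI_RGT_0); lra) CFx CFy Hnz Hper (fun t => Th t + Th t) (alW P Q e)).
    - split. intro x. apply cp_plus; apply CTh.
      intros t _. destruct (ES t) as [E1 E2]. rewrite E1, E2. apply pm_scale'. lra.
      apply pm_mul; apply LTh.
    - split. apply c_alW; auto.
      intros t _. destruct (EF1 t) as [E1 E2]. rewrite E1, E2. apply lift_alW; auto. }
  rewrite alW_wind in Hwind; auto; [|exists q; reflexivity].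
  set (phi := PI * (P - 2 * Q)).
  assert (Hth2 : Th (2 * PI) = Th 0 + phi) by (unfold phi; lra).
  assert (Hsphi : sin phi = 0) by apply sin_phi.
  assert (Hcphi : cos phi = if Nat.even p then 1 else -1) by apply cos_parity.
  assert (Hsig : forall t, sigma (t + 2 * PI) = sigma t \/ sigma (t + 2 * PI) = opp4 (sigma t)).
  { intro t. apply lmap_inj. rewrite !Hl. unfold tangent_lift. destruct Hc as [_ [Hcp _]].
    rewrite Hcp, ut_per; auto. }
  set (ev := fun t => sa sigma (t + 2 * PI) * sa sigma t + sb sigma (t + 2 * PI) * sb sigma t
                    + sc sigma (t + 2 * PI) * sc sigma t + sd sigma (t + 2 * PI) * sd sigma t).
  assert (Hev : forall t, (sigma (t + 2 * PI) = sigma t -> ev t = 1) /\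
                          (sigma (t + 2 * PI) = opp4 (sigma t) -> ev t = -1)).
  { intro t. assert (K := S3_sum sigma HS3 t). unfold ev, sa, sb, sc, sd in *. split; intro E; rewrite E.
    - exact K.
    - destruct (sigma t) as [[a b] [cc dd]]. simpl in *. lra. }
  assert (Cev : continuity ev).
  { intro x. unfold ev. assert (Csh : forall f, continuity f -> continuity_pt (fun t => f (t + 2 * PI)) x).
    { intros f Cf. apply cp_comp. apply cp_plus. apply cp_id. apply cp_const. apply Cf. }
    repeat apply cp_plus; apply cp_mult; try apply Csh; auto. }
  assert (Hev1 : forall t, ev t = 1 \/ ev t = -1).
  { intro t. destruct (Hsig t) as [E|E]; [left|right]; apply (Hev t); auto. }
  assert (Hevc := pm1_const ev Cev Hev1).
  set (e0 := ev 0) in *.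
  assert (Hcomp : forall t, sa sigma (t + 2 * PI) = e0 * sa sigma t /\ sb sigma (t + 2 * PI) = e0 * sb sigma t /\
                            sc sigma (t + 2 * PI) = e0 * sc sigma t /\ sd sigma (t + 2 * PI) = e0 * sd sigma t).
  { intro t. destruct (Hsig t) as [E|E].
    - assert (Ee : e0 = 1) by (rewrite <- (Hevc t); apply (Hev t); auto).
      rewrite Ee. unfold sa, sb, sc, sd. rewrite E. repeat split; ring.
    - assert (Ee : e0 = -1) by (rewrite <- (Hevc t); apply (Hev t); auto).
      rewrite Ee. unfold sa, sb, sc, sd. rewrite E. destruct (sigma t) as [[a b] [cc dd]]. simpl. repeat split; ring. }
  assert (He0phi : e0 = cos phi).
  { assert (L1 := LTh (0 + 2 * PI)). destruct (Hcomp 0) as [_ [_ [K3 K4]]]. rewrite K3, K4 in L1.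
    replace (0 + 2 * PI) with (2 * PI) in L1 by ring. rewrite Hth2 in L1.
    assert (L2 := pm_rot _ _ _ phi (LTh 0)). rewrite Hsphi in L2.
    assert (L2' : pm (cos phi * sc sigma 0) (cos phi * sd sigma 0) (Th 0 + phi)).
    { eapply pm_ext. exact L2. ring. ring. }
    assert (Hpos := pm_same_sign _ _ _ _ _ L1 L2' (Hz 0)).
    destruct (Hev1 0) as [K|K]; fold e0 in K; rewrite K in *;
    destruct (Nat.even p); rewrite Hcphi in *; lra. }
  assert (Hper1 : forall t, sigma (t + T) = sigma t).
  { intro t. unfold T. destruct (Nat.even p) eqn:Ev.
    - destruct (Hsig t) as [E|E]; auto. exfalso.
      assert (K := proj2 (Hev t) E). rewrite (Hevc t) in K. fold e0 in K. rewrite He0phi, Hcphi in K; try rewrite Ev in K; lra.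
    - assert (Hopp : forall u, sigma (u + 2 * PI) = opp4 (sigma u)).
      { intro u. destruct (Hsig u) as [E|E]; auto. exfalso.
        assert (K := proj1 (Hev u) E). rewrite (Hevc u) in K. fold e0 in K. rewrite He0phi, Hcphi in K; try rewrite Ev in K; lra. }
      replace (t + 4 * PI) with ((t + 2 * PI) + 2 * PI) by ring. rewrite !Hopp. apply opp4_invol. }
  split; auto.
  assert (Hth : forall t, Th (t + 2 * PI) = Th t + phi).
  { set (D := fun t => Th (t + 2 * PI) - Th t - phi).
    assert (CD : continuity D).
    { intro x. unfold D. apply cp_minus; [apply cp_minus|apply cp_const]; [|apply CTh].
      apply cp_comp. apply cp_plus. apply cp_id. apply cp_const. apply CTh. }
    assert (Hcos : forall t, cos (D t) = 1).
    { intro t. unfold D. replace (Th (t + 2 * PI) - Th t - phi) with (Th (t + 2 * PI) - (Th t + phi)) by ring.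
      apply (pm_cos1 (sc sigma (t + 2 * PI)) (sd sigma (t + 2 * PI))). apply LTh.
      destruct (Hcomp t) as [_ [_ [K3 K4]]]. rewrite K3, K4, He0phi.
      assert (L2 := pm_rot _ _ _ phi (LTh t)). rewrite Hsphi in L2. eapply pm_ext. exact L2. ring. ring. }
    intro t. assert (K := cos1_const D CD Hcos t). unfold D in K.
    replace (0 + 2 * PI) with (2 * PI) in K by ring. rewrite Hth2 in K. lra. }
  unfold torus_curve.
  destruct (Nat.Even_or_Odd p) as [[k Hk]|[k Hk]].
  - assert (Ev : Nat.even p = true) by (apply Nat.even_spec; exists k; auto).
    assert (ET : T = 2 * PI) by (unfold T; rewrite Ev; reflexivity).
    clearbody T. subst T.
    apply (final_homotopy sigma Th (2 * PI) (INR p - 2 * INR q) (INR p) c1 c2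
             (Z.of_nat k - Z.of_nat q) (Z.of_nat k)); auto.
    + intro t. rewrite Hth. unfold phi, P, Q. field.
    + rewrite minus_IZR, <- !INR_IZR_INZ, Hk, mult_INR. simpl. field.
    + rewrite <- INR_IZR_INZ, Hk, mult_INR. simpl. field.
  - assert (Ev : Nat.even p = false).
    { rewrite <- Nat.negb_odd. rewrite (proj2 (Nat.odd_spec _)). reflexivity. exists k. auto. }
    assert (ET : T = 4 * PI) by (unfold T; rewrite Ev; reflexivity).
    clearbody T. subst T.
    apply (final_homotopy sigma Th (4 * PI) (INR p - 2 * INR q) (INR p) c1 c2
             (Z.of_nat p - 2 * Z.of_nat q) (Z.of_nat p)); auto.
    + intro t. replace (t + 4 * PI) with ((t + 2 * PI) + 2 * PI) by ring. rewrite !Hth. unfold phi, P, Q. field.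
    + rewrite minus_IZR, mult_IZR, <- !INR_IZR_INZ. simpl. field.
    + rewrite <- INR_IZR_INZ. field.
Qed.
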